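(* Let $a\ge 4$, $b>0$, $d>0$ with $d<b$, let $J_1,J_2$ satisfy the standing assumptions below, and assume the support of $J_2$ is contained in $[-S,S]$ for some $S\in(0,\infty)$. Let $s=s^*$ and let $\lambda_1\in(0,\hat\lambda_2)$ be the double root of $A(\lambda):=d[I_2(\lambda)-1]-s^*\lambda+b=0$ (so that $d\int_{\mathbb{R}}J_2(y)ye^{\lambda_1 y}dy=s^*$). Choose $\lambda_0\in(0,\min\{\lambda_1,\hat\lambda_1\})$ with $I_1(\lambda_0)-1-s^*\lambda_0<0$. Choose $h>\lambda_1 e$ large enough that $hze^{-\lambda_1 z}=1$ has exactly two roots $z_1<z_2$ with $0<z_1<1/\lambda_1<z_2$ and $z_2-z_1>S$. Choose $z_3>z_2$ with $he^{-\lambda_0 z_3}\le a(\lambda_1-\lambda_0)e/4$. Choose $q>0$ large enough that $z_0:=(q/h)^2>z_2$ and $$q>\frac{16bh^2\max_{z>0}\{z^2(z+S)^{3/2}e^{-\lambda_1 z}\}}{d\int_{\mathbb{R}}J_2(y)y^2e^{\lambda_1 y}dy}.$$ Let $g(z):=(hz-q\sqrt z)e^{-\lambda_1 z}$ for $z\ge0$ and let $z_M\in(z_0,\infty)$ be its unique maximum point. Fix $\delta$ with $0<\delta<\min\{g(z_M),\,1-1/a,\,\tfrac12(1-d/b)\}$, let $z_4\in(z_0,z_M)$ satisfy $g(z_4)=\delta$, and choose $$0<\varepsilon<\frac{\min\{\delta,\,hz_4-q\sqrt{z_4}\}}{1+s^*\lambda_1+a}.$$ Define $\overline\phi(z)=1-\varepsilon$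 for $z\le0$, $\overline\phi(z)=1-\varepsilon e^{-\lambda_1 z}$ for $z>0$; $\underline\phi(z)=\tfrac12$ for $z\le z_3$, $\underline\phi(z)=1-\tfrac12e^{-\lambda_0(z-z_3)}$ for $z>z_3$; $\overline\psi(z)=1$ for $z\le z_2$, $\overline\psi(z)=hze^{-\lambda_1 z}$ for $z>z_2$; $\underline\psi(z)=\delta$ for $z\le z_4$, $\underline\psi(z)=(hz-q\sqrt z)e^{-\lambda_1 z}$ for $z>z_4$. Then $(\overline\phi,\overline\psi)$ and $(\underline\phi,\underline\psi)$ are a pair of upper and lower solutions of the traveling wave system with speed $s^*$ (in the sense defined below).
   Context: Standing assumptions: for $i=1,2$, $J_i$ is nonnegative and continuous on $\mathbb{R}$, $\int_{\mathbb{R}}J_i=1$, $J_i(y)=J_i(-y)$, and there is $\hat\lambda_i\in(0,\infty]$ with $I_i(\lambda):=\int_{\mathbb{R}}J_i(y)e^{\lambda y}dy<\infty$ for $\lambda\in(0,\hat\lambda_i)$ and $I_i(\lambda)\to\infty$ as $\lambda\uparrow\hat\lambda_i$. Define $s^*:=\inf_{\lambda\in(0,\hat\lambda_2)}\frac{d[I_2(\lambda)-1]+b}{\lambda}$ (positive and attained). For a function $u$ let $\mathcal{N}_i[u](z):=\int_{\mathbb{R}}J_i(y)u(z-y)dy-u(z)$. Definition: positive continuous functions $(\overline\phi,\overline\psi)$ and $(\underline\phi,\underline\psi)$ are a pair of upper and lower solutions of the system $\mathcal{N}_1[\phi]+s\phi'+a\phi(1-\phi)-\psi=0$, $d\mathcal{N}_2[\psi]+s\psi'+b\psi(1-\psi/\phi)=0$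 if $\underline\phi\le\overline\phi$ and $\underline\psi\le\overline\psi$ on $\mathbb{R}$ and, for all $z\in\mathbb{R}\setminus E$ with $E$ some finite subset of $\mathbb{R}$: $\mathcal{N}_1[\overline\phi](z)+s\overline\phi'(z)+a\overline\phi(z)[1-\overline\phi(z)]-\underline\psi(z)\le0$; $d\mathcal{N}_2[\overline\psi](z)+s\overline\psi'(z)+b\overline\psi(z)[1-\overline\psi(z)/\overline\phi(z)]\le0$; $\mathcal{N}_1[\underline\phi](z)+s\underline\phi'(z)+a\underline\phi(z)[1-\underline\phi(z)]-\overline\psi(z)\ge0$; $d\mathcal{N}_2[\underline\psi](z)+s\underline\psi'(z)+b\underline\psi(z)[1-\underline\psi(z)/\underline\phi(z)]\ge0$. *)

(* Defs.v *)
From Stdlib Require Import Reals Lra List.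
From Coquelicot Require Import Coquelicot.
Open Scope R_scope.

Definition RInt_R (f : R -> R) : R :=
  RInt_gen f (Rbar_locally m_infty) (Rbar_locally p_infty).

Definition ex_RInt_R (f : R -> R) : Prop :=
  ex_RInt_gen f (Rbar_locally m_infty) (Rbar_locally p_infty).

Definition Ik (J : R -> R) (lam : R) : R :=
  RInt_R (fun y => J y * exp (lam * y)).

Definition kernel_ok (J : R -> R) (lamhat : Rbar) : Prop :=
  (forall y, 0 <= J y) /\
  (forall y, continuous J y) /\
  is_RInt_gen J (Rbar_locally m_infty) (Rbar_locally p_infty) 1 /\
  (forall y, J y = J (- y)) /\
  Rbar_lt 0 lamhat /\
  (forall lam, 0 < lam -> Rbar_lt lam lamhat ->
      ex_RInt_R (fun y => J y * exp (lam * y))) /\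
  (match lamhat with
   | Finite l => filterlim (Ik J) (at_left l) (Rbar_locally p_infty)
   | p_infty => filterlim (Ik J) (Rbar_locally p_infty) (Rbar_locally p_infty)
   | m_infty => False
   end).

Definition s_star (J2 : R -> R) (lamhat2 : Rbar) (d b : R) : R :=
  real (Glb_Rbar (fun x => exists lam, 0 < lam /\ Rbar_lt lam lamhat2 /\
                     x = (d * (Ik J2 lam - 1) + b) / lam)).

Definition Nop (J u : R -> R) (z : R) : R :=
  RInt_R (fun y => J y * u (z - y)) - u z.

Definition upper_lower_pair (J1 J2 : R -> R) (a b d s : R)
  (phiU psiU phiL psiL : R -> R) : Prop :=
  (forall z, 0 < phiU z /\ 0 < psiU z /\ 0 < phiL z /\ 0 < psiL z) /\
  (forall z, continuous phiU z /\ continuous psiU z /\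
             continuous phiL z /\ continuous psiL z) /\
  (forall z, phiL z <= phiU z /\ psiL z <= psiU z) /\
  exists E : list R, forall z, ~ In z E ->
    ex_derive phiU z /\ ex_derive psiU z /\ ex_derive phiL z /\ ex_derive psiL z /\
    Nop J1 phiU z + s * Derive phiU z + a * phiU z * (1 - phiU z) - psiL z <= 0 /\
    d * Nop J2 psiU z + s * Derive psiU z + b * psiU z * (1 - psiU z / phiU z) <= 0 /\
    Nop J1 phiL z + s * Derive phiL z + a * phiL z * (1 - phiL z) - psiU z >= 0 /\
    d * Nop J2 psiL z + s * Derive psiL z + b * psiL z * (1 - psiL z / phiL z) >= 0.

Definition phi_up (eps lam1 : R) (z : R) : R :=
  if Rle_dec z 0 then 1 - eps else 1 - eps * exp (- lam1 * z).
Definition phi_low (lam0 z3 : R) (z : R) : R :=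
  if Rle_dec z z3 then / 2 else 1 - / 2 * exp (- lam0 * (z - z3)).
Definition psi_up (h lam1 z2 : R) (z : R) : R :=
  if Rle_dec z z2 then 1 else h * z * exp (- lam1 * z).
Definition psi_low (delta h q lam1 z4 : R) (z : R) : R :=
  if Rle_dec z z4 then delta else (h * z - q * sqrt z) * exp (- lam1 * z).

(* Main.v *)
Require Import Defs.
From Stdlib Require Import Reals Lra List Classical FunctionalExtensionality.
From Coquelicot Require Import Coquelicot.
Open Scope R_scope.

Notation FM := (Rbar_locally m_infty).
Notation FP := (Rbar_locally p_infty).

Lemma FM_proper : ProperFilter' FM.
Proof. apply Proper_StrongProper, Rbar_locally_filter. Qed.
Lemma FP_proper : ProperFilter' FP.
Proof. apply Proper_StrongProper, Rbar_locally_filter. Qed.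

Lemma RInt_correctR (f : R -> R) (a b : R) : ex_RInt f a b -> is_RInt f a b (RInt f a b).
Proof. exact (RInt_correct (V:=R_CompleteNormedModule) f a b). Qed.
Lemma is_RInt_uniqueR (f : R -> R) (a b l : R) : is_RInt f a b l -> RInt f a b = l.
Proof. exact (is_RInt_unique (V:=R_CompleteNormedModule) f a b l). Qed.

Lemma Rabs_le_inv (x y : R) : Rabs x <= y -> - y <= x <= y.
Proof. intros H. assert (H1 := Rle_abs x). assert (H2 := Rle_abs (- x)). rewrite Rabs_Ropp in H2. lra. Qed.

Lemma ex_derive_contR (f : R -> R) (x : R) : ex_derive f x -> continuous f x.
Proof. exact (ex_derive_continuous (K:=R_AbsRing) (V:=R_NormedModule) f x). Qed.

Lemma ball_R (x e y : R) : ball x e y <-> Rabs (y - x) < e.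
Proof. reflexivity. Qed.

Lemma RInt_zero_ext (f : R -> R) (a b : R) :
  (forall x, Rmin a b < x < Rmax a b -> f x = 0) -> RInt f a b = 0.
Proof.
  intros H. rewrite (RInt_ext f (fun _ => 0)) by exact H.
  rewrite RInt_const. unfold scal; simpl. unfold mult; simpl. ring.
Qed.

Lemma gen_compact (f : R -> R) (S : R) : 0 < S ->
  (forall y, f y <> 0 -> - S <= y <= S) -> (forall a b, ex_RInt f a b) ->
  is_RInt_gen f FM FP (RInt f (- S) S).
Proof.
  intros HS Hsupp Hex P HP.
  unfold filtermapi.
  apply (Filter_prod _ _ _ (fun a => a < - S) (fun b => S < b)).
  - exists (- S). auto.
  - exists S. auto.
  - intros x y Hx Hy. exists (RInt f x y). split.
    + exact (RInt_correct f x y (Hex x y)).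
    + replace (RInt f x y) with (RInt f (- S) S); [exact (locally_singleton _ _ HP)|].
      rewrite <- (RInt_Chasles f x (- S) y) by auto.
      rewrite <- (RInt_Chasles f (- S) S y) by auto.
      rewrite (RInt_zero_ext f x (- S)).
      rewrite (RInt_zero_ext f S y).
      assert (Hr : forall r : R, r = plus 0 (plus r 0)) by (intros; unfold plus; simpl; ring). apply Hr.
      * intros t Ht. rewrite Rmin_left in Ht by lra. rewrite Rmax_right in Ht by lra.
        destruct (Req_dec (f t) 0); auto. apply Hsupp in H. lra.
      * intros t Ht. rewrite Rmin_left in Ht by lra. rewrite Rmax_right in Ht by lra.
        destruct (Req_dec (f t) 0); auto. apply Hsupp in H. lra.
Qed.

Lemma RInt_R_compact (f : R -> R) (S : R) : 0 < S ->
  (forall y, f y <> 0 -> - S <= y <= S) -> (forall a b, ex_RInt f a b) ->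
  RInt_R f = RInt f (- S) S.
Proof.
  intros. unfold RInt_R.
  pose proof (gen_compact f S H H0 H1) as H2.
  apply (is_RInt_gen_unique (V:=R_CompleteNormedModule) (Fa:=FM) (Fb:=FP) (FFa:=FM_proper) (FFb:=FP_proper) f) in H2. exact H2.
Qed.

Lemma gen_ge0 (f : R -> R) (l : R) : is_RInt_gen f FM FP l ->
  (forall x, 0 <= f x) -> 0 <= l.
Proof.
  intros H Hf.
  assert (H0 := is_RInt_gen_scal f 0 l H).
  assert (Hn := RInt_gen_norm (V:=R_CompleteNormedModule) (Fa:=FM) (Fb:=FP) (fun y => scal 0 (f y)) f (scal 0 l) l).
  assert (Hz : forall r : R, norm (scal 0 r) = 0).
  { intros r. change (Rabs (0 * r) = 0). rewrite Rmult_0_l. apply Rabs_R0. }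
  rewrite <- (Hz l). apply Hn; auto.
  - exists (fun a => a < 0) (fun b => 0 < b). exists 0; auto. exists 0; auto.
    intros; simpl; lra.
  - exists (fun a => True) (fun b => True). exists 0; auto. exists 0; auto.
    intros; simpl. rewrite Hz. apply Hf.
Qed.

Lemma gen_le (f g : R -> R) (lf lg : R) : is_RInt_gen f FM FP lf ->
  is_RInt_gen g FM FP lg -> (forall x, f x <= g x) -> lf <= lg.
Proof.
  intros Hf Hg H.
  assert (Hm := is_RInt_gen_minus g f lg lf Hg Hf).
  apply gen_ge0 in Hm.
  - unfold minus, plus, opp in Hm; simpl in Hm. lra.
  - intros x. unfold minus, plus, opp; simpl. specialize (H x). lra.
Qed.
Lemma RInt_mono_nonneg (f : R -> R) (a' a b b' : R) :
  (forall x, 0 <= f x) -> (forall u v, ex_RInt f u v) ->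
  a' <= a -> a <= b -> b <= b' -> RInt f a b <= RInt f a' b'.
Proof.
  intros Hf Hex H1 H2 H3.
  rewrite <- (RInt_Chasles f a' a b') by auto.
  rewrite <- (RInt_Chasles f a b b') by auto.
  assert (0 <= RInt f a' a) by (apply RInt_ge_0; auto).
  assert (0 <= RInt f b b') by (apply RInt_ge_0; auto).
  assert (Hr : forall r1 r2 r3 : R, 0 <= r1 -> 0 <= r3 -> r2 <= plus r1 (plus r2 r3))
    by (intros; unfold plus; simpl; lra).
  apply Hr; auto.
Qed.

Lemma gen_upper (g : R -> R) (G a b : R) :
  (forall x, 0 <= g x) -> (forall u v, ex_RInt g u v) ->
  is_RInt_gen g FM FP G -> a <= b -> RInt g a b <= G.
Proof.
  intros Hg Hex HG Hab.
  destruct (Rle_dec (RInt g a b) G) as [H|H]; auto. exfalso.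
  apply Rnot_le_lt in H.
  set (e := mkposreal _ (Rlt_Rminus _ _ H)).
  assert (Hl : locally G (fun v => Rabs (v - G) < e)).
  { exists e. intros y Hy. exact Hy. }
  specialize (HG _ Hl). unfold filtermapi in HG.
  destruct HG as [Q R0 [MQ HQ] [MR HR] Himp].
  set (x := Rmin (a - 1) (MQ - 1)). set (y := Rmax (b + 1) (MR + 1)).
  assert (Hx : x < MQ) by (unfold x; apply Rle_lt_trans with (MQ - 1); [apply Rmin_r|lra]).
  assert (Hy : MR < y) by (unfold y; apply Rlt_le_trans with (MR + 1); [lra|apply Rmax_r]).
  assert (Hxa : x <= a) by (unfold x; apply Rle_trans with (a - 1); [apply Rmin_l|lra]).
  assert (Hyb : b <= y) by (unfold y; apply Rle_trans with (b + 1); [lra|apply Rmax_l]).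
  destruct (Himp x y (HQ x Hx) (HR y Hy)) as [v [Hv1 Hv2]].
  simpl in Hv1. apply (is_RInt_unique (V:=R_CompleteNormedModule)) in Hv1.
  assert (RInt g a b <= RInt g x y) by (apply RInt_mono_nonneg; auto; lra).
  simpl in e. unfold e in Hv2; simpl in Hv2.
  rewrite <- Hv1 in Hv2. apply Rabs_def2 in Hv2. lra.
Qed.

Lemma gen_dom (f g : R -> R) (G : R) :
  (forall x, 0 <= f x <= g x) -> (forall u v, ex_RInt f u v) ->
  (forall u v, ex_RInt g u v) -> is_RInt_gen g FM FP G ->
  ex_RInt_gen f FM FP.
Proof.
  intros Hfg Hexf Hexg HG.
  set (E := fun v => exists a b, a <= b /\ v = RInt f a b).
  assert (Hb : bound E).
  { exists G. intros v [a [b [Hab ->]]].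
    apply Rle_trans with (RInt g a b).
    - apply RInt_le; auto. intros; apply Hfg.
    - apply gen_upper; auto. intros; apply Rle_trans with (f x); apply Hfg. }
  assert (Hne : exists v, E v) by (exists (RInt f 0 0); exists 0, 0; split; auto; lra).
  destruct (completeness E Hb Hne) as [L [HL1 HL2]].
  exists L. intros P [eps Heps]. unfold filtermapi.
  assert (Hex : exists a0 b0, a0 <= b0 /\ L - eps < RInt f a0 b0).
  { apply NNPP. intros Hn.
    assert (Hub : is_upper_bound E (L - eps)).
    { intros v [a [b [Hab ->]]]. apply Rnot_lt_le. intros Hlt. apply Hn. exists a, b; auto. }
    specialize (HL2 _ Hub). destruct eps; simpl in *; lra. }
  destruct Hex as [a0 [b0 [Hab0 Hlt]]].
  apply (Filter_prod _ _ _ (fun a => a < a0) (fun b => b0 < b)).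
  - exists a0. auto.
  - exists b0. auto.
  - intros x y Hx Hy. exists (RInt f x y). split.
    + exact (RInt_correct f x y (Hexf x y)).
    + apply Heps. apply ball_R.
      assert (RInt f a0 b0 <= RInt f x y).
      { apply RInt_mono_nonneg; auto; try lra. intros; apply Hfg. }
      assert (RInt f x y <= L). { apply HL1. exists x, y. split; auto; lra. }
      apply Rabs_def1; lra.
Qed.
Lemma cont_mul (J u : R -> R) (y : R) : continuous J y -> continuous u y ->
  continuous (fun t => J t * u t) y.
Proof. intros; apply (continuous_mult J u); auto. Qed.

Lemma exR (f : R -> R) (a b : R) : (forall y, continuous f y) -> ex_RInt f a b.
Proof. intros; apply (ex_RInt_continuous (V:=R_CompleteNormedModule)); auto. Qed.

Lemma RInt_lin3 (f1 f2 f3 : R -> R) (c1 c2 c3 a b : R) :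
  ex_RInt f1 a b -> ex_RInt f2 a b -> ex_RInt f3 a b ->
  RInt (fun y => c1 * f1 y + c2 * f2 y + c3 * f3 y) a b =
  c1 * RInt f1 a b + c2 * RInt f2 a b + c3 * RInt f3 a b.
Proof.
  intros H1 H2 H3.
  apply is_RInt_uniqueR.
  apply (is_RInt_plus (fun y => c1 * f1 y + c2 * f2 y) (fun y => c3 * f3 y)).
  apply (is_RInt_plus (fun y => c1 * f1 y) (fun y => c2 * f2 y)).
  apply (is_RInt_scal f1). apply RInt_correctR; auto.
  apply (is_RInt_scal f2). apply RInt_correctR; auto.
  apply (is_RInt_scal f3). apply RInt_correctR; auto.
Qed.

Lemma exp_upper (x : R) : Rabs x <= 1 -> exp x <= 1 + x + 3 * x ^ 2.
Proof.
  intros Hx. apply Rabs_le_inv in Hx.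
  set (u := x / 2).
  assert (Hu : - (1/2) <= u <= 1/2) by (unfold u; lra).
  assert (He : exp x = exp u * exp u) by (rewrite <- exp_plus; f_equal; unfold u; field).
  assert (H1 : 1 - u <= exp (- u)) by (pose proof (exp_ineq1_le (- u)); lra).
  assert (H2 : exp u * exp (- u) = 1) by (rewrite <- exp_plus; replace (u + - u) with 0 by ring; apply exp_0).
  assert (Hpos : 0 < exp u) by apply exp_pos.
  assert (H3 : exp u * (1 - u) <= 1).
  { rewrite <- H2. apply Rmult_le_compat_l; lra. }
  assert (Hpoly : 1 <= (1 - u) ^ 2 * (1 + 2 * u + 12 * u ^ 2)).
  { assert (0 <= u ^ 2 * (9 - 22 * u + 12 * u ^ 2)).
    { apply Rmult_le_pos. nra. nra. }
    nra. }
  assert (Hc : 1 + x + 3 * x ^ 2 = 1 + 2 * u + 12 * u ^ 2) by (unfold u; field).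
  rewrite He, Hc.
  assert (0 < 1 - u) by lra.
  assert (Hq : exp u * exp u * (1 - u) ^ 2 <= 1).
  { replace (exp u * exp u * (1 - u) ^ 2) with ((exp u * (1 - u)) * (exp u * (1 - u))) by ring.
    assert (0 <= exp u * (1 - u)) by (apply Rmult_le_pos; lra).
    nra. }
  assert (0 < (1 - u) ^ 2) by (apply pow_lt; lra).
  assert (0 < 1 + 2 * u + 12 * u ^ 2) by nra.
  apply Rmult_le_reg_r with ((1 - u) ^ 2); auto.
  nra.
Qed.
Lemma kernel_cont (J : R -> R) (lh : Rbar) : kernel_ok J lh -> forall y, continuous J y.
Proof. intros [_ [H _]]; exact H. Qed.
Lemma kernel_nonneg (J : R -> R) (lh : Rbar) : kernel_ok J lh -> forall y, 0 <= J y.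
Proof. intros [H _]; exact H. Qed.
Lemma kernel_int1 (J : R -> R) (lh : Rbar) : kernel_ok J lh -> is_RInt_gen J FM FP 1.
Proof. intros [_ [_ [H _]]]; exact H. Qed.

Section J2sec.
Variables (J2 : R -> R) (lh2 : Rbar) (S : R).
Hypothesis HK : kernel_ok J2 lh2.
Hypothesis HS : 0 < S.
Hypothesis Hsupp : forall y, J2 y <> 0 -> - S <= y <= S.

Lemma J2_compact (u : R -> R) : (forall y, continuous u y) ->
  RInt_R (fun y => J2 y * u y) = RInt (fun y => J2 y * u y) (- S) S.
Proof.
  intros Hu. apply RInt_R_compact; auto.
  - intros y Hy. apply Hsupp. intros H0. apply Hy. rewrite H0. ring.
  - intros. apply exR. intros. apply cont_mul; auto. apply (kernel_cont _ _ HK).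
Qed.

Lemma J2_int1 : RInt J2 (- S) S = 1.
Proof.
  assert (H1 := kernel_int1 _ _ HK).
  assert (H2 : is_RInt_gen J2 FM FP (RInt J2 (- S) S)).
  { apply gen_compact; auto. intros. apply exR. apply (kernel_cont _ _ HK). }
  apply (is_RInt_gen_unique (V:=R_CompleteNormedModule) (Fa:=FM) (Fb:=FP) (FFa:=FM_proper) (FFb:=FP_proper) J2) in H1.
  apply (is_RInt_gen_unique (V:=R_CompleteNormedModule) (Fa:=FM) (Fb:=FP) (FFa:=FM_proper) (FFb:=FP_proper) J2) in H2.
  rewrite <- H1, <- H2. reflexivity.
Qed.

Lemma J2_cont_exp (l : R) : forall y, continuous (fun t => exp (l * t)) y.
Proof. intros y. apply ex_derive_contR. auto_derive. auto. Qed.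

Lemma Ik_J2 (mu : R) : Ik J2 mu = RInt (fun y => J2 y * exp (mu * y)) (- S) S.
Proof. unfold Ik. apply (J2_compact (fun y => exp (mu * y))). apply J2_cont_exp. Qed.

Lemma Ik_J2_ge0 (mu : R) : 0 <= Ik J2 mu.
Proof.
  rewrite Ik_J2. apply RInt_ge_0. lra.
  apply exR. intros; apply cont_mul. apply (kernel_cont _ _ HK). apply J2_cont_exp.
  intros. apply Rmult_le_pos. apply (kernel_nonneg _ _ HK). left; apply exp_pos.
Qed.

Variables (b d : R).
Hypothesis Hb : 0 < b.
Hypothesis Hd : 0 < d.
Hypothesis Hdb : d < b.

Lemma sstar_facts (lam1 : R) : 0 < lam1 -> Rbar_lt lam1 lh2 ->
  0 <= s_star J2 lh2 d b /\
  forall mu, 0 < mu -> Rbar_lt mu lh2 -> s_star J2 lh2 d b * mu <= d * (Ik J2 mu - 1) + b.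
Proof.
  intros Hl1 Hl1b. unfold s_star.
  set (E := fun x => exists lam, 0 < lam /\ Rbar_lt lam lh2 /\ x = (d * (Ik J2 lam - 1) + b) / lam).
  destruct (Glb_Rbar_correct E) as [Hlb Hglb].
  assert (H0 : is_lb_Rbar E 0).
  { intros x [lam [H1 [H2 ->]]]. simpl. assert (H3 := Ik_J2_ge0 lam).
    left. apply Rdiv_lt_0_compat; auto. nra. }
  apply Hglb in H0.
  assert (HE1 : E ((d * (Ik J2 lam1 - 1) + b) / lam1)) by (exists lam1; auto).
  apply Hlb in HE1.
  destruct (Glb_Rbar E) as [r| |]; simpl in *; try contradiction.
  split; auto.
  intros mu Hmu Hmub.
  assert (HEm : E ((d * (Ik J2 mu - 1) + b) / mu)) by (exists mu; auto).
  apply Hlb in HEm. simpl in HEm.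
  apply Rmult_le_compat_r with (r := mu) in HEm; [|lra].
  unfold Rdiv in HEm. rewrite Rmult_assoc, Rinv_l in HEm by lra. lra.
Qed.

End J2sec.
Section J2sec2.
Variables (J2 : R -> R) (lh2 : Rbar) (S : R).
Hypothesis HK : kernel_ok J2 lh2.
Hypothesis HS : 0 < S.
Hypothesis Hsupp : forall y, J2 y <> 0 -> - S <= y <= S.

Lemma cont_J2 (u : R -> R) : (forall y, continuous u y) -> forall y, continuous (fun t => J2 t * u t) y.
Proof. intros. apply cont_mul; auto. apply (kernel_cont _ _ HK). Qed.

Lemma cont_yexp (l : R) : forall y, continuous (fun t => t * exp (l * t)) y.
Proof. intros y. apply ex_derive_contR. auto_derive. auto. Qed.
Lemma cont_y2exp (l : R) : forall y, continuous (fun t => t ^ 2 * exp (l * t)) y.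
Proof. intros y. apply ex_derive_contR. auto_derive. auto. Qed.

Lemma t0_exists (lam1 : R) : 0 < lam1 -> Rbar_lt lam1 lh2 ->
  exists t0, 0 < t0 /\ forall t, Rabs t <= t0 ->
    0 < lam1 + t /\ Rbar_lt (lam1 + t) lh2 /\ Rabs t * S <= 1.
Proof.
  intros H1 H2.
  assert (HS' : 0 < / S) by (apply Rinv_0_lt_compat; auto).
  destruct lh2 as [l| |]; simpl in H2; try contradiction.
  - exists (Rmin (Rmin (lam1 / 2) ((l - lam1) / 2)) (/ S)).
    split. { apply Rmin_pos. apply Rmin_pos; lra. auto. }
    intros t Ht.
    assert (Ha := Rmin_l (Rmin (lam1 / 2) ((l - lam1) / 2)) (/ S)).
    assert (Hb := Rmin_r (Rmin (lam1 / 2) ((l - lam1) / 2)) (/ S)).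
    assert (Hc := Rmin_l (lam1 / 2) ((l - lam1) / 2)).
    assert (Hd := Rmin_r (lam1 / 2) ((l - lam1) / 2)).
    apply Rabs_le_inv in Ht as Ht'.
    split; [lra|]. split; [simpl; lra|].
    assert (Rabs t <= / S) by lra.
    apply Rmult_le_compat_r with (r := S) in H; [|lra].
    rewrite Rinv_l in H by lra. lra.
  - exists (Rmin (lam1 / 2) (/ S)).
    split. { apply Rmin_pos; lra. }
    intros t Ht.
    assert (Ha := Rmin_l (lam1 / 2) (/ S)).
    assert (Hb := Rmin_r (lam1 / 2) (/ S)).
    apply Rabs_le_inv in Ht as Ht'.
    split; [lra|]. split; [simpl; auto|].
    assert (Rabs t <= / S) by lra.
    apply Rmult_le_compat_r with (r := S) in H; [|lra].
    rewrite Rinv_l in H by lra. lra.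
Qed.

Lemma Ik_upper (lam1 t : R) : Rabs t * S <= 1 ->
  Ik J2 (lam1 + t) <= Ik J2 lam1
     + t * RInt (fun y => J2 y * (y * exp (lam1 * y))) (- S) S
     + 3 * t ^ 2 * RInt (fun y => J2 y * (y ^ 2 * exp (lam1 * y))) (- S) S.
Proof.
  intros Ht. rewrite !(Ik_J2 J2 lh2 S HK HS Hsupp).
  rewrite <- (Rmult_1_l (RInt (fun y => J2 y * exp (lam1 * y)) (- S) S)).
  rewrite <- RInt_lin3.
  2,3,4: apply exR; apply cont_J2; auto using J2_cont_exp, cont_yexp, cont_y2exp.
  apply RInt_le. lra.
  apply exR; apply cont_J2; auto using J2_cont_exp.
  apply exR. intros y.
  apply (continuous_plus (fun y => 1 * (J2 y * exp (lam1 * y)) + t * (J2 y * (y * exp (lam1 * y))))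
     (fun y => 3 * t ^ 2 * (J2 y * (y ^ 2 * exp (lam1 * y))))).
  apply (continuous_plus (fun y => 1 * (J2 y * exp (lam1 * y))) (fun y => t * (J2 y * (y * exp (lam1 * y))))).
  apply (continuous_scal_r 1 (fun y => (J2 y * exp (lam1 * y)))). apply cont_J2; auto using J2_cont_exp.
  apply (continuous_scal_r t (fun y => (J2 y * (y * exp (lam1 * y))))). apply cont_J2; auto using cont_yexp.
  apply (continuous_scal_r (3 * t ^ 2) (fun y => (J2 y * (y ^ 2 * exp (lam1 * y))))). apply cont_J2; auto using cont_y2exp.
  intros y Hy.
  assert (HJ := kernel_nonneg _ _ HK y).
  assert (Hty : Rabs (t * y) <= 1).
  { rewrite Rabs_mult. apply Rle_trans with (Rabs t * S); auto.
    apply Rmult_le_compat_l. apply Rabs_pos. apply Rabs_le. lra. }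
  assert (He := exp_upper _ Hty).
  replace ((lam1 + t) * y) with (lam1 * y + t * y) by ring. rewrite exp_plus.
  assert (Hp := exp_pos (lam1 * y)).
  replace (1 * (J2 y * exp (lam1 * y)) + t * (J2 y * (y * exp (lam1 * y))) +
     3 * t ^ 2 * (J2 y * (y ^ 2 * exp (lam1 * y)))) with
     (J2 y * exp (lam1 * y) * (1 + t * y + 3 * (t * y) ^ 2)) by ring.
  replace (J2 y * (exp (lam1 * y) * exp (t * y))) with (J2 y * exp (lam1 * y) * exp (t * y)) by ring.
  apply Rmult_le_compat_l; auto. apply Rmult_le_pos; lra.
Qed.

Variables (b d : R).

Lemma deriv_cond (lam1 s : R) : 0 < d -> 0 < lam1 -> Rbar_lt lam1 lh2 ->
  (forall mu, 0 < mu -> Rbar_lt mu lh2 -> s * mu <= d * (Ik J2 mu - 1) + b) ->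
  d * (Ik J2 lam1 - 1) - s * lam1 + b = 0 ->
  d * RInt (fun y => J2 y * (y * exp (lam1 * y))) (- S) S = s.
Proof.
  intros Hd Hl1 Hl1b Hmin HA.
  set (K1 := RInt (fun y => J2 y * (y * exp (lam1 * y))) (- S) S).
  set (K2 := RInt (fun y => J2 y * (y ^ 2 * exp (lam1 * y))) (- S) S).
  destruct (t0_exists lam1 Hl1 Hl1b) as [t0 [Ht0 Ht]].
  set (c := d * K1 - s). set (M := Rabs (3 * d * K2)).
  assert (Hkey : forall t, Rabs t <= t0 -> 0 <= t * c + 3 * d * K2 * t ^ 2).
  { intros t Ht1. destruct (Ht t Ht1) as [H1 [H2 H3]].
    assert (Hu := Ik_upper lam1 t H3). fold K1 K2 in Hu.
    specialize (Hmin _ H1 H2). unfold c. nra. }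
  assert (Hpos : forall t, 0 < t -> t <= t0 -> - (M * t) <= c /\ c <= M * t).
  { intros t H1 H2.
    assert (Hm3 : Rabs (- t) <= t0) by (rewrite Rabs_Ropp, Rabs_right; lra).
    assert (Hp3 : Rabs t <= t0) by (rewrite Rabs_right; lra).
    assert (Ha := Hkey t Hp3). assert (Hb' := Hkey (- t) Hm3).
    assert (HM1 : 3 * d * K2 <= M) by apply Rle_abs.
    assert (HM2 : - M <= 3 * d * K2) by (assert (HH := Rle_abs (- (3 * d * K2))); rewrite Rabs_Ropp in HH; unfold M; lra).
    split.
    - apply Rmult_le_reg_l with t; auto. nra.
    - apply Rmult_le_reg_l with t; auto. nra. }
  destruct (Req_dec c 0) as [Hc|Hc]. { unfold c in Hc; lra. }
  exfalso.
  assert (HM0 : 0 <= M) by apply Rabs_pos.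
  assert (Hca : 0 < Rabs c) by (apply Rabs_pos_lt; auto).
  set (t := Rmin t0 (Rabs c / (2 * (M + 1)))).
  assert (Htp : 0 < t) by (apply Rmin_pos; auto; apply Rdiv_lt_0_compat; lra).
  assert (Ht1 : t <= t0) by apply Rmin_l.
  assert (Ht2 : t <= Rabs c / (2 * (M + 1))) by apply Rmin_r.
  destruct (Hpos t Htp Ht1) as [Ha Hb'].
  assert (Rabs c <= M * t) by (apply Rabs_le; lra).
  assert (M * t <= M * (Rabs c / (2 * (M + 1)))) by (apply Rmult_le_compat_l; auto).
  assert (M * (Rabs c / (2 * (M + 1))) < Rabs c).
  { unfold Rdiv. rewrite <- Rmult_assoc.
    apply Rmult_lt_reg_r with (2 * (M + 1)). lra.
    rewrite Rmult_assoc, Rinv_l by lra. nra. }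
  lra.
Qed.

End J2sec2.
Section J2sec3.
Variables (J2 : R -> R) (lh2 : Rbar) (S : R).
Hypothesis HK : kernel_ok J2 lh2.
Hypothesis HS : 0 < S.
Hypothesis Hsupp : forall y, J2 y <> 0 -> - S <= y <= S.

Lemma cont_near (f : R -> R) (x e : R) : continuous f x -> 0 < e ->
  exists dl, 0 < dl /\ forall t, Rabs (t - x) < dl -> Rabs (f t - f x) < e.
Proof.
  intros Hc He.
  assert (Hl : locally (f x) (fun v => Rabs (v - f x) < e)).
  { exists (mkposreal e He). intros y Hy. exact Hy. }
  destruct (Hc _ Hl) as [dl Hdl].
  exists dl. split. apply cond_pos. intros t Ht. apply Hdl. exact Ht.
Qed.

Lemma J2_pos_point : exists y0, - S < y0 < S /\ y0 <> 0 /\ 0 < J2 y0.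
Proof.
  apply NNPP. intros Hn.
  assert (Hz : forall y, - S < y < S -> y <> 0 -> J2 y = 0).
  { intros y H1 H2. destruct (kernel_nonneg _ _ HK y) as [H|H]; auto.
    exfalso. apply Hn. exists y. auto. }
  assert (Hz0 : J2 0 = 0).
  { destruct (kernel_nonneg _ _ HK 0) as [H|H]; auto. exfalso.
    destruct (cont_near J2 0 (J2 0 / 2) (kernel_cont _ _ HK 0)) as [dl [Hdl1 Hdl2]]; [lra|].
    set (t := Rmin (dl / 2) (S / 2)).
    assert (0 < t) by (apply Rmin_pos; lra).
    assert (t <= dl / 2) by apply Rmin_l. assert (t <= S / 2) by apply Rmin_r.
    assert (Ht : Rabs (t - 0) < dl) by (rewrite Rminus_0_r, Rabs_right; lra).
    specialize (Hdl2 t Ht). rewrite Hz in Hdl2 by lra.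
    apply Rabs_def2 in Hdl2. lra. }
  assert (H0 : RInt J2 (- S) S = 0).
  { apply RInt_zero_ext. intros x Hx. rewrite Rmin_left in Hx by lra. rewrite Rmax_right in Hx by lra.
    destruct (Req_dec x 0) as [->|]; auto. }
  rewrite (J2_int1 J2 lh2 S HK HS Hsupp) in H0. lra.
Qed.

Lemma K2_pos (lam1 : R) : 0 < RInt (fun y => J2 y * (y ^ 2 * exp (lam1 * y))) (- S) S.
Proof.
  set (f := fun y => J2 y * (y ^ 2 * exp (lam1 * y))).
  assert (Hfc : forall y, continuous f y) by (apply cont_J2 with lh2; auto; apply cont_y2exp).
  assert (Hf0 : forall y, 0 <= f y).
  { intros y. unfold f. apply Rmult_le_pos. apply (kernel_nonneg _ _ HK).
    apply Rmult_le_pos. apply pow2_ge_0. left; apply exp_pos. }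
  destruct J2_pos_point as [y0 [Hy0 [Hy0n Hy0p]]].
  destruct (cont_near J2 y0 (J2 y0 / 2) (kernel_cont _ _ HK y0)) as [dl [Hdl1 Hdl2]]; [lra|].
  assert (Hay : 0 < Rabs y0) by (apply Rabs_pos_lt; auto).
  assert (HaS : Rabs y0 < S) by (apply Rabs_def1; lra).
  set (eta := Rmin (dl / 2) (Rmin (Rabs y0 / 2) ((S - Rabs y0) / 2))).
  assert (He1 : eta <= dl / 2) by apply Rmin_l.
  assert (He2 : eta <= Rabs y0 / 2) by (apply Rle_trans with (Rmin (Rabs y0 / 2) ((S - Rabs y0) / 2)); [apply Rmin_r|apply Rmin_l]).
  assert (He3 : eta <= (S - Rabs y0) / 2) by (apply Rle_trans with (Rmin (Rabs y0 / 2) ((S - Rabs y0) / 2)); [apply Rmin_r|apply Rmin_r]).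
  assert (He0 : 0 < eta) by (apply Rmin_pos; [lra|apply Rmin_pos; lra]).
  assert (Hy0a := Rle_abs y0). assert (Hy0b := Rle_abs (- y0)). rewrite Rabs_Ropp in Hy0b.
  assert (HexR : forall u v, ex_RInt f u v) by (intros; apply exR; auto).
  rewrite <- (RInt_Chasles f (- S) (y0 - eta) S) by auto.
  rewrite <- (RInt_Chasles f (y0 - eta) (y0 + eta) S) by auto.
  assert (0 <= RInt f (- S) (y0 - eta)) by (apply RInt_ge_0; auto; lra).
  assert (0 <= RInt f (y0 + eta) S) by (apply RInt_ge_0; auto; lra).
  assert (0 < RInt f (y0 - eta) (y0 + eta)).
  { apply RInt_gt_0; [lra| |auto].
    intros x Hx. unfold f.
    assert (Hxy : Rabs (x - y0) < dl) by (apply Rabs_def1; lra).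
    specialize (Hdl2 x Hxy). apply Rabs_def2 in Hdl2.
    assert (x <> 0).
    { intros ->. destruct (Rle_dec 0 y0).
      - rewrite Rabs_right in He2 by lra. lra.
      - rewrite Rabs_left in He2 by lra. lra. }
    apply Rmult_lt_0_compat; [lra|]. apply Rmult_lt_0_compat.
    apply pow2_gt_0; auto. apply exp_pos. }
  assert (Hr : forall r1 r2 r3 : R, 0 <= r1 -> 0 < r2 -> 0 <= r3 -> 0 < plus r1 (plus r2 r3))
    by (intros; unfold plus; simpl; lra).
  apply Hr; auto.
Qed.
End J2sec3.
Lemma Rpower_3_2 (x : R) : 0 < x -> Rpower x (3 / 2) = x * sqrt x.
Proof.
  intros Hx. replace (3 / 2) with (1 + / 2) by field.
  rewrite Rpower_plus, Rpower_1, Rpower_sqrt by auto. reflexivity.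
Qed.

Lemma exp_ge_pow5 (t : R) : 0 <= t -> (1 + t) ^ 5 <= exp (5 * t).
Proof.
  intros Ht. replace (5 * t) with (t + t + t + t + t) by ring.
  rewrite !exp_plus. assert (H := exp_ineq1_le t).
  assert (0 <= 1 + t) by lra.
  replace (exp t * exp t * exp t * exp t * exp t) with (exp t ^ 5) by ring.
  apply pow_incr. lra.
Qed.

Lemma poly_exp_bound (S lam z : R) : 0 < S -> 0 < lam -> 0 < z ->
  z ^ 2 * Rpower (z + S) (3 / 2) * exp (- lam * z) <=
  25 / lam ^ 2 * ((5 / lam + S) ^ 2 + 1).
Proof.
  intros HS Hl Hz.
  rewrite Rpower_3_2 by lra.
  set (w := sqrt (z + S)).
  assert (Hw : w * w = z + S) by (apply sqrt_sqrt; lra).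
  assert (Hw0 : 0 <= w) by apply sqrt_pos.
  assert (Hw3 : (z + S) * w <= (z + S) ^ 2 + 1).
  { rewrite <- Hw. destruct (Rle_dec w 1).
    - assert (w * w * w <= 1). { assert (w * w <= 1) by nra. nra. } nra.
    - nra. }
  set (U := 1 + lam * z / 5).
  assert (HU1 : 1 <= U) by (unfold U; assert (0 < lam * z) by nra; lra).
  assert (HeU : U ^ 5 <= exp (lam * z)).
  { replace (lam * z) with (5 * (lam * z / 5)) by field. apply exp_ge_pow5.
    assert (0 < lam * z) by nra. lra. }
  set (a := 5 / lam).
  assert (Ha : 0 < a) by (unfold a; apply Rdiv_lt_0_compat; lra).
  assert (Hza : z <= a * U).
  { unfold a, U. field_simplify. 2: lra.
    apply Rmult_le_reg_r with lam; auto. unfold Rdiv. rewrite Rmult_assoc, Rinv_l by lra.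
    nra. }
  assert (HzS : z + S <= U * (a + S)) by nra.
  assert (HzS2 : (z + S) ^ 2 + 1 <= U ^ 2 * ((a + S) ^ 2 + 1)).
  { assert (0 <= z + S) by lra. assert ((z + S) ^ 2 <= (U * (a + S)) ^ 2) by (apply pow_incr; lra).
    assert (1 <= U ^ 2) by nra. nra. }
  assert (Hz2 : z ^ 2 <= a ^ 2 * U ^ 2).
  { replace (a ^ 2 * U ^ 2) with ((a * U) ^ 2) by ring. apply pow_incr; lra. }
  assert (Hnum : z ^ 2 * ((z + S) * w) <= a ^ 2 * ((a + S) ^ 2 + 1) * U ^ 5).
  { apply Rle_trans with (z ^ 2 * ((z + S) ^ 2 + 1)).
    apply Rmult_le_compat_l; auto. apply pow2_ge_0.
    apply Rle_trans with (a ^ 2 * U ^ 2 * (U ^ 2 * ((a + S) ^ 2 + 1))).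
    apply Rmult_le_compat; auto. apply pow2_ge_0. assert (0 <= (z+S)^2) by apply pow2_ge_0. lra.
    assert (0 <= a ^ 2 * U ^ 4 * ((a + S) ^ 2 + 1)).
    { apply Rmult_le_pos. apply Rmult_le_pos. apply pow2_ge_0. apply pow_le; lra.
      assert (0 <= (a+S)^2) by apply pow2_ge_0. lra. }
    replace (a ^ 2 * U ^ 2 * (U ^ 2 * ((a + S) ^ 2 + 1))) with (a ^ 2 * U ^ 4 * ((a + S) ^ 2 + 1) * 1) by ring.
    replace (a ^ 2 * ((a + S) ^ 2 + 1) * U ^ 5) with (a ^ 2 * U ^ 4 * ((a + S) ^ 2 + 1) * U) by ring.
    apply Rmult_le_compat_l; auto. }
  assert (HC : 25 / lam ^ 2 = a ^ 2) by (unfold a; field; lra).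
  rewrite HC.
  assert (He : exp (- lam * z) * exp (lam * z) = 1).
  { rewrite <- exp_plus. replace (- lam * z + lam * z) with 0 by ring. apply exp_0. }
  assert (Hep := exp_pos (- lam * z)).
  assert (HU5 : 0 < U ^ 5) by (apply pow_lt; lra).
  assert (Hex : exp (- lam * z) * U ^ 5 <= 1).
  { rewrite <- He. apply Rmult_le_compat_l; lra. }
  replace (z ^ 2 * (z + S * w) ) with (z ^ 2 * (z + S * w)) by reflexivity.
  apply Rle_trans with (a ^ 2 * ((a + S) ^ 2 + 1) * U ^ 5 * exp (- lam * z)).
  - replace (z ^ 2 * ((z + S) * w) * exp (- lam * z)) with (z ^ 2 * ((z + S) * w) * exp (- lam * z)) by reflexivity.
    apply Rmult_le_compat_r; lra.
  - assert (0 <= a ^ 2 * ((a + S) ^ 2 + 1)).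
    { apply Rmult_le_pos. apply pow2_ge_0. assert (0 <= (a+S)^2) by apply pow2_ge_0. lra. }
    replace (a ^ 2 * ((a + S) ^ 2 + 1) * U ^ 5 * exp (- lam * z)) with
      (a ^ 2 * ((a + S) ^ 2 + 1) * (exp (- lam * z) * U ^ 5)) by ring.
    rewrite <- (Rmult_1_r (a ^ 2 * ((a + S) ^ 2 + 1))) at 2.
    apply Rmult_le_compat_l; auto.
Qed.

Lemma lub_bound (S lam : R) : 0 < S -> 0 < lam -> forall z, 0 < z ->
  z ^ 2 * Rpower (z + S) (3 / 2) * exp (- lam * z) <=
  real (Lub_Rbar (fun x => exists z, 0 < z /\
               x = z ^ 2 * Rpower (z + S) (3 / 2) * exp (- lam * z))).
Proof.
  intros HS Hl z Hz.
  set (E := fun x => exists z, 0 < z /\ x = z ^ 2 * Rpower (z + S) (3 / 2) * exp (- lam * z)).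
  destruct (Lub_Rbar_correct E) as [Hub Hleast].
  assert (HC : is_ub_Rbar E (25 / lam ^ 2 * ((5 / lam + S) ^ 2 + 1))).
  { intros x [z' [Hz' ->]]. simpl. apply poly_exp_bound; auto. }
  apply Hleast in HC.
  assert (Hz1 : E (z ^ 2 * Rpower (z + S) (3 / 2) * exp (- lam * z))) by (exists z; auto).
  apply Hub in Hz1.
  destruct (Lub_Rbar E); simpl in *; try contradiction; auto.
Qed.
Lemma xexp_decr (lam x y : R) : 0 < lam -> / lam <= y -> y <= x ->
  x * exp (- lam * x) <= y * exp (- lam * y).
Proof.
  intros Hl Hy Hxy.
  assert (Hly : 1 <= lam * y).
  { apply Rmult_le_compat_l with (r := lam) in Hy; [|lra]. rewrite Rinv_r in Hy by lra. lra. }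
  assert (He := exp_ineq1_le (lam * (x - y))).
  assert (Hx : x <= y * exp (lam * (x - y))).
  { assert (0 < y) by (assert (0 < / lam) by (apply Rinv_0_lt_compat; lra); lra). nra. }
  replace (exp (lam * (x - y))) with (exp (- lam * y) * exp (lam * x)) in Hx
    by (rewrite <- exp_plus; f_equal; ring).
  assert (Hpos := exp_pos (- lam * x)).
  assert (Hinv : exp (lam * x) * exp (- lam * x) = 1)
    by (rewrite <- exp_plus; replace (lam * x + - lam * x) with 0 by ring; apply exp_0).
  apply Rmult_le_compat_r with (r := exp (- lam * x)) in Hx; [|lra].
  replace (y * (exp (- lam * y) * exp (lam * x)) * exp (- lam * x)) with
    (y * exp (- lam * y) * (exp (lam * x) * exp (- lam * x))) in Hx by ring.
  rewrite Hinv in Hx. lra.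
Qed.

Section PsiUp.
Variables (h lam1 z1 z2 : R).
Hypothesis Hl : 0 < lam1.
Hypothesis Hh : h > lam1 * exp 1.
Hypothesis Hz1 : h * z1 * exp (- lam1 * z1) = 1.
Hypothesis Hz2 : h * z2 * exp (- lam1 * z2) = 1.
Hypothesis Hroots : forall z, h * z * exp (- lam1 * z) = 1 -> z = z1 \/ z = z2.
Hypothesis Hz1p : 0 < z1.
Hypothesis Hz1l : z1 < / lam1.
Hypothesis Hz2l : / lam1 < z2.

Lemma h_pos : 0 < h.
Proof. assert (0 < exp 1) by apply exp_pos. nra. Qed.

Lemma psi_up_le1 : forall x, psi_up h lam1 z2 x <= 1.
Proof.
  intros x. unfold psi_up. destruct (Rle_dec x z2); [lra|].
  rewrite <- Hz2. rewrite !Rmult_assoc. apply Rmult_le_compat_l. left; apply h_pos.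
  apply xexp_decr; lra.
Qed.

Lemma fx_ge1 : forall x, z1 < x -> x <= z2 -> 1 <= h * x * exp (- lam1 * x).
Proof.
  intros x H1 H2.
  assert (Hh0 := h_pos).
  destruct (Rle_dec (/ lam1) x).
  - rewrite <- Hz2. rewrite !Rmult_assoc. apply Rmult_le_compat_l. lra.
    apply xexp_decr; lra.
  - apply Rnot_lt_le. intros Hlt.
    set (f := fun t => h * t * exp (- lam1 * t)).
    assert (Hc : continuity f).
    { intros t. apply continuity_pt_filterlim. apply ex_derive_contR. unfold f. auto_derive. auto. }
    assert (Hf1 : 1 < f (/ lam1)).
    { unfold f. replace (- lam1 * / lam1) with (- (1)) by (field; lra).
      rewrite exp_Ropp. assert (He := exp_pos 1).
      apply Rmult_lt_reg_r with (exp 1); auto.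
      replace (h * / lam1 * / exp 1 * exp 1) with (h / lam1) by (field; lra).
      apply Rmult_lt_reg_r with lam1; auto. replace (h / lam1 * lam1) with h by (field; lra). lra. }
    destruct (IVT_gen f x (/ lam1) 1 Hc) as [x' [Hx' Hfx']].
    { split. apply Rle_trans with (f x). apply Rmin_l. unfold f; lra.
      apply Rle_trans with (f (/ lam1)). lra. apply Rmax_r. }
    rewrite Rmin_left in Hx' by lra. rewrite Rmax_right in Hx' by lra.
    destruct (Hroots x' Hfx'); lra.
Qed.

Lemma psi_up_le_f : forall x, z1 < x -> psi_up h lam1 z2 x <= h * x * exp (- lam1 * x).
Proof.
  intros x Hx. unfold psi_up. destruct (Rle_dec x z2). apply fx_ge1; auto. lra.
Qed.

End PsiUp.
Lemma MVT_simple (f df : R -> R) (a b : R) : (forall x, is_derive f x (df x)) -> a < b ->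
  exists c, a <= c <= b /\ f b - f a = df c * (b - a).
Proof.
  intros Hd Hab.
  destruct (MVT_gen f a b df) as [c [Hc1 Hc2]].
  - intros; auto.
  - intros x _. apply continuity_pt_filterlim. apply ex_derive_contR. exists (df x). auto.
  - rewrite Rmin_left in Hc1 by lra. rewrite Rmax_right in Hc1 by lra. exists c; auto.
Qed.

Section PsiLow.
Variables (h q lam1 zM delta z4 : R).
Hypothesis Hh : 0 < h.
Hypothesis Hq : 0 < q.
Hypothesis Hl : 0 < lam1.
Hypothesis Hz4a : (q / h) ^ 2 < z4.
Hypothesis Hz4b : z4 < zM.
Hypothesis Hz4 : (h * z4 - q * sqrt z4) * exp (- lam1 * z4) = delta.
Hypothesis HdM : delta < (h * zM - q * sqrt zM) * exp (- lam1 * zM).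
Hypothesis Hdp : 0 < delta.

Definition Gt (t : R) := (h * t ^ 2 - q * t) * exp (- lam1 * t ^ 2).
Definition pt (t : R) := h * t - q / 2 - lam1 * h * t ^ 3 + lam1 * q * t ^ 2.
Definition dpt (t : R) := h - 3 * lam1 * h * t ^ 2 + 2 * lam1 * q * t.

Lemma Gt_deriv : forall t, is_derive Gt t (2 * exp (- lam1 * t ^ 2) * pt t).
Proof. intros t. unfold Gt, pt. auto_derive; auto. replace (t * (t * 1)) with (t ^ 2) by ring. field. Qed.
Lemma pt_deriv : forall t, is_derive pt t (dpt t).
Proof. intros t. unfold pt, dpt. auto_derive; auto; ring. Qed.

Lemma g_Gt (x : R) : 0 <= x -> (h * x - q * sqrt x) * exp (- lam1 * x) = Gt (sqrt x).
Proof.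
  intros Hx. unfold Gt. replace (sqrt x ^ 2) with x; auto.
  simpl. rewrite Rmult_1_r. rewrite sqrt_sqrt; auto.
Qed.

Lemma Gt_pos_sign (a b : R) : a < b -> Gt a < Gt b -> exists c, a <= c <= b /\ 0 < pt c.
Proof.
  intros Hab HG. destruct (MVT_simple Gt _ a b Gt_deriv Hab) as [c [Hc Heq]].
  exists c. split; auto.
  assert (He := exp_pos (- lam1 * c ^ 2)).
  destruct (Rlt_le_dec 0 (pt c)); auto. exfalso.
  assert (2 * exp (- lam1 * c ^ 2) * pt c * (b - a) <= 0).
  { apply Rmult_le_0_r; [|lra]. assert (0 < 2 * exp (- lam1 * c ^ 2)) by lra. nra. }
  lra.
Qed.
Lemma Gt_neg_sign (a b : R) : a < b -> Gt b < Gt a -> exists c, a <= c <= b /\ pt c < 0.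
Proof.
  intros Hab HG. destruct (MVT_simple Gt _ a b Gt_deriv Hab) as [c [Hc Heq]].
  exists c. split; auto.
  assert (He := exp_pos (- lam1 * c ^ 2)).
  destruct (Rlt_le_dec (pt c) 0); auto. exfalso.
  assert (0 <= 2 * exp (- lam1 * c ^ 2) * pt c * (b - a)).
  { apply Rmult_le_pos; [|lra]. assert (0 < 2 * exp (- lam1 * c ^ 2)) by lra. nra. }
  lra.
Qed.
Lemma pt_pos_sign (a b : R) : a < b -> pt a < pt b -> exists c, a <= c <= b /\ 0 < dpt c.
Proof.
  intros Hab HG. destruct (MVT_simple pt _ a b pt_deriv Hab) as [c [Hc Heq]].
  exists c. split; auto.
  destruct (Rlt_le_dec 0 (dpt c)); auto. exfalso.
  assert (dpt c * (b - a) <= 0) by (apply Rmult_le_0_r; lra). lra.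
Qed.
Lemma pt_neg_sign (a b : R) : a < b -> pt b < pt a -> exists c, a <= c <= b /\ dpt c < 0.
Proof.
  intros Hab HG. destruct (MVT_simple pt _ a b pt_deriv Hab) as [c [Hc Heq]].
  exists c. split; auto.
  destruct (Rlt_le_dec (dpt c) 0); auto. exfalso.
  assert (0 <= dpt c * (b - a)) by (apply Rmult_le_pos; lra). lra.
Qed.

Lemma g_le_delta : forall x, x <= z4 -> (h * x - q * sqrt x) * exp (- lam1 * x) <= delta.
Proof.
  intros x Hx.
  assert (Hep := exp_pos (- lam1 * x)).
  assert (Hqh : 0 < q / h) by (apply Rdiv_lt_0_compat; auto).
  destruct (Rle_dec x ((q / h) ^ 2)) as [Hle|Hgt].
  - assert (h * x - q * sqrt x <= 0).
    { destruct (Rle_dec x 0).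
      - rewrite sqrt_neg_0 by auto. nra.
      - assert (Hs : sqrt x <= q / h).
        { rewrite <- (sqrt_pow2 (q / h)) by lra. apply sqrt_le_1_alt; auto. }
        assert (Hsx := sqrt_sqrt x). assert (Hs0 := sqrt_pos x).
        assert (h * sqrt x <= q).
        { apply Rmult_le_compat_l with (r := h) in Hs; [|lra].
          replace (h * (q / h)) with q in Hs by (field; lra). lra. }
        rewrite <- (sqrt_sqrt x) at 1 by lra. nra. }
    assert ((h * x - q * sqrt x) * exp (- lam1 * x) <= 0) by (apply Rmult_le_0_r; lra). lra.
  - apply Rnot_le_lt in Hgt. apply Rnot_lt_le. intros Hbig.
    assert (Hx0 : 0 < x) by (assert (0 < (q/h)^2) by (apply pow_lt; lra); lra).
    assert (Hxz4 : x < z4).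
    { destruct (Rtotal_order x z4) as [HH|[HH|HH]]; [auto|subst; lra|lra]. }
    set (t0 := q / h). set (tx := sqrt x). set (t4 := sqrt z4). set (tM := sqrt zM).
    assert (Ht0x : t0 < tx).
    { unfold t0, tx. rewrite <- (sqrt_pow2 (q / h)) by lra. apply sqrt_lt_1_alt.
      split; [apply pow2_ge_0|lra]. }
    assert (Htx4 : tx < t4) by (apply sqrt_lt_1_alt; lra).
    assert (Ht4M : t4 < tM) by (apply sqrt_lt_1_alt; lra).
    assert (HG0 : Gt t0 = 0) by (unfold Gt, t0; field_simplify; [|lra]; field; lra).
    rewrite g_Gt in Hbig by lra. fold tx in Hbig.
    assert (HG4 : Gt t4 = delta) by (unfold t4; rewrite <- g_Gt by lra; auto).
    assert (HGM : delta < Gt tM) by (unfold tM; rewrite <- g_Gt by lra; auto).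
    destruct (Gt_pos_sign t0 tx Ht0x) as [c0 [Hc0 Hp0]]; [lra|].
    destruct (Gt_neg_sign tx t4 Htx4) as [c1 [Hc1 Hp1]]; [lra|].
    destruct (Gt_pos_sign t4 tM Ht4M) as [c2 [Hc2 Hp2]]; [lra|].
    assert (Hc01 : c0 < c1) by (destruct (Rtotal_order c0 c1) as [HH|[HH|HH]]; [auto|subst; lra|lra]).
    assert (Hc12 : c1 < c2) by (destruct (Rtotal_order c1 c2) as [HH|[HH|HH]]; [auto|subst; lra|lra]).
    assert (Hp00 : pt 0 < pt c0) by (unfold pt at 1; lra).
    assert (Ht0p : 0 < t0) by (unfold t0; lra).
    assert (Hc0p : 0 < c0) by lra.
    destruct (pt_pos_sign 0 c0 Hc0p Hp00) as [d0 [Hd0 Hq0]].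
    destruct (pt_neg_sign c0 c1 Hc01) as [d1 [Hd1 Hq1]]; [lra|].
    destruct (pt_pos_sign c1 c2 Hc12) as [d2 [Hd2 Hq2]]; [lra|].
    assert (Hd01 : d0 < d1) by (destruct (Rtotal_order d0 d1) as [HH|[HH|HH]]; [auto|subst; lra|lra]).
    assert (Hd12 : d1 < d2) by (destruct (Rtotal_order d1 d2) as [HH|[HH|HH]]; [auto|subst; lra|lra]).
    assert (Hid : (d2 - d0) * dpt d1 - (d2 - d1) * dpt d0 - (d1 - d0) * dpt d2 =
                  3 * lam1 * h * (d1 - d0) * (d2 - d1) * (d2 - d0)) by (unfold dpt; ring).
    assert (0 < 3 * lam1 * h * (d1 - d0) * (d2 - d1) * (d2 - d0)).
    { repeat apply Rmult_lt_0_compat; lra. }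
    assert ((d2 - d0) * dpt d1 < 0) by (apply Rmult_pos_neg; lra).
    assert (0 < (d2 - d1) * dpt d0) by (apply Rmult_lt_0_compat; lra).
    assert (0 < (d1 - d0) * dpt d2) by (apply Rmult_lt_0_compat; lra).
    lra.
Qed.

Lemma hz_mono : forall z, z4 <= z -> h * z4 - q * sqrt z4 <= h * z - q * sqrt z.
Proof.
  intros z Hz.
  assert (Hqh : 0 < q / h) by (apply Rdiv_lt_0_compat; auto).
  assert (Hs4 : q / h < sqrt z4).
  { rewrite <- (sqrt_pow2 (q / h)) by lra. apply sqrt_lt_1_alt. split; [apply pow2_ge_0|lra]. }
  assert (Hsz : sqrt z4 <= sqrt z) by (apply sqrt_le_1_alt; auto).
  assert (H4 := sqrt_sqrt z4). assert (Hzz := sqrt_sqrt z).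
  assert (q < h * sqrt z4).
  { apply Rmult_lt_compat_l with (r := h) in Hs4; auto.
    replace (h * (q / h)) with q in Hs4 by (field; lra). lra. }
  assert (Hq2 := pow2_ge_0 (q / h)).
  assert (E4 : z4 = sqrt z4 * sqrt z4) by (symmetry; apply sqrt_sqrt; lra).
  assert (Ez : z = sqrt z * sqrt z) by (symmetry; apply sqrt_sqrt; lra).
  assert (0 <= (sqrt z - sqrt z4) * (h * (sqrt z + sqrt z4) - q)).
  { apply Rmult_le_pos. lra. assert (0 <= sqrt z) by apply sqrt_pos. nra. }
  rewrite E4 at 1. rewrite Ez at 1. nra.
Qed.

End PsiLow.
Lemma sqrt_taylor (z y S : R) : 0 < S -> S < z -> - S <= y <= S ->
  sqrt (z - y) <= sqrt z - y / (2 * sqrt z) - y ^ 2 / (8 * ((z + S) * sqrt (z + S))).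
Proof.
  intros HS Hz Hy.
  set (u := sqrt z). set (v := sqrt (z - y)). set (w := sqrt (z + S)).
  assert (Hu : u * u = z) by (apply sqrt_sqrt; lra).
  assert (Hv : v * v = z - y) by (apply sqrt_sqrt; lra).
  assert (Hw : w * w = z + S) by (apply sqrt_sqrt; lra).
  assert (Hu0 : 0 < u) by (apply sqrt_lt_R0; lra).
  assert (Hv0 : 0 <= v) by apply sqrt_pos.
  assert (Hw0 : 0 < w) by (apply sqrt_lt_R0; lra).
  assert (Huw : u <= w) by (apply sqrt_le_1_alt; lra).
  assert (Hvw : v <= w) by (apply sqrt_le_1_alt; lra).
  replace y with (u * u - v * v) by lra.
  replace (z + S) with (w * w) by lra.
  assert (Hk : 0 <= 4 * (w * w * w) - u * ((u + v) * (u + v))).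
  { assert ((u + v) * (u + v) <= 4 * (w * w)) by nra.
    assert (u * ((u + v) * (u + v)) <= w * (4 * (w * w))).
    { apply Rmult_le_compat; nra. }
    nra. }
  assert (Heq : u - (u * u - v * v) / (2 * u) - (u * u - v * v) ^ 2 / (8 * (w * w * w)) - v =
     (u - v) ^ 2 * (4 * (w * w * w) - u * ((u + v) * (u + v))) / (8 * u * (w * w * w))).
  { field. split; lra. }
  assert (0 <= (u - v) ^ 2 * (4 * (w * w * w) - u * ((u + v) * (u + v))) / (8 * u * (w * w * w))).
  { apply Rmult_le_pos. apply Rmult_le_pos; auto. apply pow2_ge_0.
    left. apply Rinv_0_lt_compat. assert (0 < w * w * w) by (repeat apply Rmult_lt_0_compat; lra). nra. }
  lra.
Qed.
Lemma loc_lt (x c : R) : x < c -> locally x (fun t => t < c).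
Proof.
  intros H. exists (mkposreal _ (Rlt_Rminus _ _ H)). intros t Ht.
  assert (Ht2 : Rabs (t - x) < c - x) by exact Ht. apply Rabs_def2 in Ht2. lra.
Qed.
Lemma loc_gt (x c : R) : c < x -> locally x (fun t => c < t).
Proof.
  intros H. exists (mkposreal _ (Rlt_Rminus _ _ H)). intros t Ht.
  assert (Ht2 : Rabs (t - x) < x - c) by exact Ht. apply Rabs_def2 in Ht2. lra.
Qed.

Lemma pw_cont (F f g : R -> R) (c x : R) :
  (forall y, F y = if Rle_dec y c then f y else g y) ->
  (x <= c -> continuous f x) -> (c <= x -> continuous g x) -> f c = g c ->
  continuous F x.
Proof.
  intros HF Hf Hg Hc.
  destruct (Rlt_le_dec x c) as [H|H].
  - apply continuous_ext_loc with f. 2: apply Hf; lra.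
    apply filter_imp with (fun t => t < c). 2: apply loc_lt; auto.
    intros t Ht. rewrite HF. destruct (Rle_dec t c); auto; lra.
  - destruct (Rlt_le_dec c x) as [H'|H'].
    + apply continuous_ext_loc with g. 2: apply Hg; lra.
      apply filter_imp with (fun t => c < t). 2: apply loc_gt; auto.
      intros t Ht. rewrite HF. destruct (Rle_dec t c); auto; lra.
    + assert (x = c) by lra. subst x.
      intros P HP.
      assert (HFc : F c = f c) by (rewrite HF; destruct (Rle_dec c c); auto; lra).
      rewrite HFc in HP.
      assert (Hf' := Hf (Rle_refl c) P HP).
      rewrite Hc in HP.
      assert (Hg' := Hg (Rle_refl c) P HP).
      unfold filtermap in *.
      apply filter_imp with (fun y => P (f y) /\ P (g y)).
      2: apply filter_and; auto.
      intros y [H1 H2]. rewrite HF. destruct (Rle_dec y c); auto.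
Qed.

Lemma pw_deriv_l (F f g : R -> R) (c x l : R) :
  (forall y, F y = if Rle_dec y c then f y else g y) -> x < c ->
  is_derive f x l -> is_derive F x l.
Proof.
  intros HF Hx Hd. apply is_derive_ext_loc with f; auto.
  apply filter_imp with (fun t => t < c). 2: apply loc_lt; auto.
  intros t Ht. rewrite HF. destruct (Rle_dec t c); auto; lra.
Qed.
Lemma pw_deriv_r (F f g : R -> R) (c x l : R) :
  (forall y, F y = if Rle_dec y c then f y else g y) -> c < x ->
  is_derive g x l -> is_derive F x l.
Proof.
  intros HF Hx Hd. apply is_derive_ext_loc with g; auto.
  apply filter_imp with (fun t => c < t). 2: apply loc_gt; auto.
  intros t Ht. rewrite HF. destruct (Rle_dec t c); auto; lra.
Qed.
Lemma cont_shift (phi : R -> R) (z : R) : (forall x, continuous phi x) ->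
  forall y, continuous (fun t => phi (z - t)) y.
Proof.
  intros Hc y. apply (continuous_comp (fun t => z - t) phi).
  apply ex_derive_contR. auto_derive. auto. apply Hc.
Qed.

Section J1sec.
Variables (J1 : R -> R) (lh1 : Rbar).
Hypothesis HK : kernel_ok J1 lh1.

Lemma J1_ex (phi : R -> R) (z : R) : (forall x, continuous phi x) -> (forall x, 0 <= phi x <= 1) ->
  is_RInt_gen (fun y => J1 y * phi (z - y)) FM FP (RInt_R (fun y => J1 y * phi (z - y))).
Proof.
  intros Hc Hb.
  unfold RInt_R. apply (RInt_gen_correct (V:=R_CompleteNormedModule) (Fa:=FM) (Fb:=FP) (FFa:=FM_proper) (FFb:=FP_proper)).
  apply gen_dom with J1 1.
  - intros x. assert (H := kernel_nonneg _ _ HK x). specialize (Hb (z - x)). split; nra.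
  - intros. apply exR. intros; apply cont_mul. apply (kernel_cont _ _ HK). apply cont_shift; auto.
  - intros. apply exR. apply (kernel_cont _ _ HK).
  - apply (kernel_int1 _ _ HK).
Qed.

Lemma J1_upper (phi : R -> R) (z : R) : (forall x, continuous phi x) -> (forall x, 0 <= phi x <= 1) ->
  RInt_R (fun y => J1 y * phi (z - y)) <= 1.
Proof.
  intros Hc Hb. apply (gen_le _ J1 _ 1 (J1_ex phi z Hc Hb) (kernel_int1 _ _ HK)).
  intros x. assert (H := kernel_nonneg _ _ HK x). specialize (Hb (z - x)). nra.
Qed.

Lemma J1_lower (phi : R -> R) (z al be lam0 : R) : (forall x, continuous phi x) -> (forall x, 0 <= phi x <= 1) ->
  ex_RInt_R (fun y => J1 y * exp (lam0 * y)) ->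
  (forall y, al + be * exp (lam0 * y) <= phi (z - y)) ->
  al + be * Ik J1 lam0 <= RInt_R (fun y => J1 y * phi (z - y)).
Proof.
  intros Hc Hb Hex Hlow.
  assert (H1 : is_RInt_gen (fun y => J1 y * exp (lam0 * y)) FM FP (Ik J1 lam0)).
  { unfold Ik, RInt_R. apply (RInt_gen_correct (V:=R_CompleteNormedModule) (Fa:=FM) (Fb:=FP) (FFa:=FM_proper) (FFb:=FP_proper)). exact Hex. }
  assert (H2 := is_RInt_gen_plus _ _ _ _
                  (is_RInt_gen_scal _ al _ (kernel_int1 _ _ HK))
                  (is_RInt_gen_scal _ be _ H1)).
  assert (Hv : al + be * Ik J1 lam0 = plus (scal al 1) (scal be (Ik J1 lam0)))
    by (change (al + be * Ik J1 lam0 = al * 1 + be * Ik J1 lam0); ring).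
  rewrite Hv.
  apply (gen_le _ _ _ _ H2 (J1_ex phi z Hc Hb)).
  intros x. unfold plus, scal; simpl. unfold mult; simpl.
  assert (H := kernel_nonneg _ _ HK x). specialize (Hlow x).
  replace (al * J1 x + be * (J1 x * exp (lam0 * x))) with (J1 x * (al + be * exp (lam0 * x))) by ring.
  apply Rmult_le_compat_l; auto.
Qed.
End J1sec.
Lemma exp_le (x y : R) : x <= y -> exp x <= exp y.
Proof. intros [H|H]. left; apply exp_increasing; auto. subst; lra. Qed.
Lemma exp_le1 (x : R) : x <= 0 -> exp x <= 1.
Proof. intros H. rewrite <- exp_0. apply exp_le; auto. Qed.
Lemma exp_lt1 (x : R) : x < 0 -> exp x < 1.
Proof. intros H. rewrite <- exp_0. apply exp_increasing; auto. Qed.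

Lemma cont_smooth_exp (c l : R) : forall x, continuous (fun z => c * exp (l * z)) x.
Proof. intros. apply ex_derive_contR. auto_derive. auto. Qed.

Lemma phiU_eq (eps lam1 : R) : forall y, phi_up eps lam1 y =
  if Rle_dec y 0 then (fun _ => 1 - eps) y else (fun z => 1 - eps * exp (- lam1 * z)) y.
Proof. reflexivity. Qed.
Lemma phiL_eq (lam0 z3 : R) : forall y, phi_low lam0 z3 y =
  if Rle_dec y z3 then (fun _ => / 2) y else (fun z => 1 - / 2 * exp (- lam0 * (z - z3))) y.
Proof. reflexivity. Qed.
Lemma psiU_eq (h lam1 z2 : R) : forall y, psi_up h lam1 z2 y =
  if Rle_dec y z2 then (fun _ => 1) y else (fun z => h * z * exp (- lam1 * z)) y.
Proof. reflexivity. Qed.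
Lemma psiL_eq (delta h q lam1 z4 : R) : forall y, psi_low delta h q lam1 z4 y =
  if Rle_dec y z4 then (fun _ => delta) y else (fun z => (h * z - q * sqrt z) * exp (- lam1 * z)) y.
Proof. reflexivity. Qed.

Lemma cont_phiU (eps lam1 : R) : forall x, continuous (phi_up eps lam1) x.
Proof.
  intros x. apply (pw_cont _ _ _ 0 x (phiU_eq eps lam1)).
  - intros; apply continuous_const.
  - intros; apply ex_derive_contR; auto_derive; auto.
  - simpl. rewrite Rmult_0_r, exp_0. ring.
Qed.
Lemma cont_phiL (lam0 z3 : R) : forall x, continuous (phi_low lam0 z3) x.
Proof.
  intros x. apply (pw_cont _ _ _ z3 x (phiL_eq lam0 z3)).
  - intros; apply continuous_const.
  - intros; apply ex_derive_contR; auto_derive; auto.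
  - simpl. replace (- lam0 * (z3 - z3)) with 0 by ring. rewrite exp_0. field.
Qed.
Lemma cont_psiU (h lam1 z2 : R) : h * z2 * exp (- lam1 * z2) = 1 ->
  forall x, continuous (psi_up h lam1 z2) x.
Proof.
  intros Hz x. apply (pw_cont _ _ _ z2 x (psiU_eq h lam1 z2)).
  - intros; apply continuous_const.
  - intros; apply ex_derive_contR; auto_derive; auto.
  - simpl. auto.
Qed.
Lemma cont_psiL (delta h q lam1 z4 : R) : 0 < z4 ->
  (h * z4 - q * sqrt z4) * exp (- lam1 * z4) = delta ->
  forall x, continuous (psi_low delta h q lam1 z4) x.
Proof.
  intros Hz4 Hz x. apply (pw_cont _ _ _ z4 x (psiL_eq delta h q lam1 z4)).
  - intros; apply continuous_const.
  - intros; apply ex_derive_contR; auto_derive; lra.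
  - simpl. auto.
Qed.
Lemma psiU_exp_bound (h lam0 lam1 z3 a z : R) : 0 < h -> 0 < lam0 -> lam0 < lam1 -> 0 < z ->
  h * exp (- lam0 * z3) <= a * (lam1 - lam0) * exp 1 / 4 ->
  h * z * exp (- lam1 * z) <= a / 4 * exp (- lam0 * (z - z3)).
Proof.
  intros Hhp H0 H01 Hz Hh.
  set (mu := lam1 - lam0).
  assert (Hmu : 0 < mu) by (unfold mu; lra).
  assert (He1 : 0 < exp 1) by apply exp_pos.
  assert (Hx : mu * z <= exp (mu * z) / exp 1).
  { assert (H := exp_ineq1_le (mu * z - 1)).
    replace (exp (mu * z - 1)) with (exp (mu * z) / exp 1) in H.
    lra. unfold Rdiv. rewrite <- exp_Ropp, <- exp_plus. f_equal. }
  assert (Hsplit : exp (- lam1 * z) = exp (- lam0 * z3) * exp (- mu * z) * exp (- lam0 * (z - z3))).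
  { rewrite <- !exp_plus. f_equal. unfold mu. ring. }
  assert (Hinv : exp (mu * z) * exp (- mu * z) = 1).
  { rewrite <- exp_plus. replace (mu * z + - mu * z) with 0 by ring. apply exp_0. }
  assert (Hzb : z * exp (- mu * z) <= / (mu * exp 1)).
  { assert (Hp := exp_pos (- mu * z)).
    apply Rmult_le_reg_l with (mu * exp 1). apply Rmult_lt_0_compat; lra.
    rewrite Rinv_r by (apply Rgt_not_eq, Rmult_lt_0_compat; lra).
    apply Rmult_le_compat_r with (r := exp 1 * exp (- mu * z)) in Hx; [|left; apply Rmult_lt_0_compat; lra].
    replace (exp (mu * z) / exp 1 * (exp 1 * exp (- mu * z))) with (exp (mu * z) * exp (- mu * z)) in Hx
      by (field; lra).
    rewrite Hinv in Hx. lra. }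
  rewrite Hsplit.
  assert (Hc := exp_pos (- lam0 * (z - z3))).
  assert (Hp3 := exp_pos (- lam0 * z3)).
  assert (Hh0 : 0 <= h * exp (- lam0 * z3)).
  { apply Rmult_le_pos; lra. }
  replace (h * z * (exp (- lam0 * z3) * exp (- mu * z) * exp (- lam0 * (z - z3))))
    with ((h * exp (- lam0 * z3)) * (z * exp (- mu * z)) * exp (- lam0 * (z - z3))) by ring.
  apply Rmult_le_compat_r; [lra|].
  apply Rle_trans with ((a * mu * exp 1 / 4) * / (mu * exp 1)).
  - apply Rmult_le_compat; auto. apply Rmult_le_pos. lra. left; apply exp_pos.
  - right. field. split; lra.
Qed.
Theorem lemma2p4
  (a b d : R) (J1 J2 : R -> R) (lamhat1 lamhat2 : Rbar) (S : R)
  (lam1 lam0 h z1 z2 z3 q zM delta z4 eps : R) :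
  4 <= a -> 0 < b -> 0 < d -> d < b ->
  kernel_ok J1 lamhat1 -> kernel_ok J2 lamhat2 ->
  0 < S -> (forall y, J2 y <> 0 -> - S <= y <= S) ->
  (* lam1: the double root of A(lam) = d [I2(lam) - 1] - s* lam + b = 0 *)
  0 < lam1 -> Rbar_lt lam1 lamhat2 ->
  d * (Ik J2 lam1 - 1) - s_star J2 lamhat2 d b * lam1 + b = 0 ->
  (* lam0 *)
  0 < lam0 -> lam0 < lam1 -> Rbar_lt lam0 lamhat1 ->
  Ik J1 lam0 - 1 - s_star J2 lamhat2 d b * lam0 < 0 ->
  (* h, z1, z2 *)
  h > lam1 * exp 1 ->
  h * z1 * exp (- lam1 * z1) = 1 -> h * z2 * exp (- lam1 * z2) = 1 ->
  (forall z, h * z * exp (- lam1 * z) = 1 -> z = z1 \/ z = z2) ->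
  0 < z1 -> z1 < / lam1 -> / lam1 < z2 -> z2 - z1 > S ->
  (* z3 *)
  z3 > z2 -> h * exp (- lam0 * z3) <= a * (lam1 - lam0) * exp 1 / 4 ->
  (* q, z0 = (q/h)^2 *)
  0 < q -> (q / h) ^ 2 > z2 ->
  q > 16 * b * h ^ 2 *
      real (Lub_Rbar (fun x => exists z, 0 < z /\
               x = z ^ 2 * Rpower (z + S) (3 / 2) * exp (- lam1 * z)))
      / (d * RInt_R (fun y => J2 y * y ^ 2 * exp (lam1 * y))) ->
  (* zM: the unique maximum point of g(z) = (h z - q sqrt z) e^{-lam1 z}, z >= 0 *)
  (q / h) ^ 2 < zM ->
  (forall z, 0 <= z ->
     (h * z - q * sqrt z) * exp (- lam1 * z) <= (h * zM - q * sqrt zM) * exp (- lam1 * zM)) ->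
  (forall z, 0 <= z ->
     (h * z - q * sqrt z) * exp (- lam1 * z) = (h * zM - q * sqrt zM) * exp (- lam1 * zM) ->
     z = zM) ->
  (* delta *)
  0 < delta ->
  delta < (h * zM - q * sqrt zM) * exp (- lam1 * zM) ->
  delta < 1 - 1 / a -> delta < / 2 * (1 - d / b) ->
  (* z4 *)
  (q / h) ^ 2 < z4 -> z4 < zM ->
  (h * z4 - q * sqrt z4) * exp (- lam1 * z4) = delta ->
  (* eps *)
  0 < eps ->
  eps < Rmin delta (h * z4 - q * sqrt z4) / (1 + s_star J2 lamhat2 d b * lam1 + a) ->
  upper_lower_pair J1 J2 a b d (s_star J2 lamhat2 d b)
    (phi_up eps lam1) (psi_up h lam1 z2)
    (phi_low lam0 z3) (psi_low delta h q lam1 z4).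

Proof.
  intros Ha4 Hb Hd Hdb HK1 HK2 HS Hsupp Hl1 Hl1b HA Hl0 Hl01 Hl0b HI1 Hh Hz1e Hz2e Hroots
    Hz1p Hz1l Hz2l Hz21 Hz3 Hz3b Hq Hq2 Hqbig HzM HzMmax HzMuniq Hdel HdelM Hdela Hdelb
    Hz4a Hz4b Hz4 Heps Hepsb.
  destruct (sstar_facts J2 lamhat2 S HK2 HS Hsupp b d Hd Hdb lam1 Hl1 Hl1b) as [Hs0 Hsmin].
  set (s := s_star J2 lamhat2 d b) in *.
  assert (HdK1 := deriv_cond J2 lamhat2 S HK2 HS Hsupp b d lam1 s Hd Hl1 Hl1b Hsmin HA).
  set (K1 := RInt (fun y => J2 y * (y * exp (lam1 * y))) (- S) S) in *.
  set (K2 := RInt (fun y => J2 y * (y ^ 2 * exp (lam1 * y))) (- S) S).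
  assert (HK2p : 0 < K2) by apply (K2_pos J2 lamhat2 S HK2 HS Hsupp).
  assert (HK2R : RInt_R (fun y => J2 y * y ^ 2 * exp (lam1 * y)) = K2).
  { replace (fun y => J2 y * y ^ 2 * exp (lam1 * y)) with (fun y => J2 y * (y ^ 2 * exp (lam1 * y)))
      by (apply functional_extensionality; intros; ring).
    apply (J2_compact J2 lamhat2 S HK2 HS Hsupp (fun y => y ^ 2 * exp (lam1 * y))).
    apply cont_y2exp. }
  rewrite HK2R in Hqbig.
  set (L := real (Lub_Rbar (fun x => exists z, 0 < z /\
               x = z ^ 2 * Rpower (z + S) (3 / 2) * exp (- lam1 * z)))) in *.
  assert (HL := lub_bound S lam1 HS Hl1). fold L in HL.
  assert (HqL : 16 * b * h ^ 2 * L < q * (d * K2)).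
  { assert (0 < d * K2) by (apply Rmult_lt_0_compat; auto).
    apply Rmult_lt_compat_r with (r := d * K2) in Hqbig; auto.
    unfold Rdiv in Hqbig. rewrite Rmult_assoc, Rinv_l in Hqbig by lra. lra. }
  set (I2 := Ik J2 lam1) in *.
  assert (HI2 : I2 = RInt (fun y => J2 y * exp (lam1 * y)) (- S) S) by apply (Ik_J2 J2 lamhat2 S HK2 HS Hsupp).
  assert (Hh0 : 0 < h) by apply (h_pos h lam1 Hl1 Hh).
  set (D := 1 + s * lam1 + a).
  assert (HD : 5 <= D) by (unfold D; assert (0 <= s * lam1) by (apply Rmult_le_pos; lra); lra).
  set (m := Rmin delta (h * z4 - q * sqrt z4)) in *.
  assert (Hm1 : m <= delta) by apply Rmin_l.
  assert (Hm2 : m <= h * z4 - q * sqrt z4) by apply Rmin_r.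
  assert (HepsD : eps * D < m).
  { apply Rmult_lt_compat_r with (r := D) in Hepsb; [|lra].
    fold D in Hepsb. unfold Rdiv in Hepsb. rewrite Rmult_assoc, Rinv_l in Hepsb by lra. lra. }
  assert (Ha1 : 1 / a <= 1 / 4).
  { unfold Rdiv. rewrite !Rmult_1_l. apply Rinv_le_contravar; lra. }
  assert (Ha0 : 0 < 1 / a) by (apply Rdiv_lt_0_compat; lra).
  assert (Hdel1 : delta < 1) by lra.
  assert (Heps1 : eps < / 5).
  { assert (eps * 5 <= eps * D) by (apply Rmult_le_compat_l; lra). lra. }
  assert (Hqh0 : 0 < (q / h) ^ 2) by (apply pow_lt; apply Rdiv_lt_0_compat; lra).
  assert (Hz2p : 0 < z2) by lra.
  assert (Hz24 : z2 < z4) by lra.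
  assert (Hz4p : 0 < z4) by lra.
  assert (Hzz : z1 + S < z2) by lra.

  assert (HcU := cont_phiU eps lam1).
  assert (HcL := cont_phiL lam0 z3).
  assert (HcpU := cont_psiU h lam1 z2 Hz2e).
  assert (HcpL := cont_psiL delta h q lam1 z4 Hz4p Hz4).
  assert (BU : forall x, 1 - eps <= phi_up eps lam1 x <= 1).
  { intros x. unfold phi_up. destruct (Rle_dec x 0). lra.
    assert (0 < exp (- lam1 * x)) by apply exp_pos.
    assert (exp (- lam1 * x) < 1) by (apply exp_lt1; assert (0 < lam1 * x) by (apply Rmult_lt_0_compat; lra); lra).
    assert (eps * exp (- lam1 * x) < eps * 1) by (apply Rmult_lt_compat_l; lra).
    assert (0 < eps * exp (- lam1 * x)) by (apply Rmult_lt_0_compat; lra). lra. }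
  assert (BL : forall x, / 2 <= phi_low lam0 z3 x <= 1).
  { intros x. unfold phi_low. destruct (Rle_dec x z3). lra.
    assert (0 < exp (- lam0 * (x - z3))) by apply exp_pos.
    assert (exp (- lam0 * (x - z3)) < 1) by (apply exp_lt1; assert (0 < lam0 * (x - z3)) by (apply Rmult_lt_0_compat; lra); lra). lra. }
  assert (BpU1 := psi_up_le1 h lam1 z2 Hl1 Hh Hz2e Hz2l).
  assert (BpU0 : forall x, 0 < psi_up h lam1 z2 x).
  { intros x. unfold psi_up. destruct (Rle_dec x z2). lra.
    apply Rmult_lt_0_compat. apply Rmult_lt_0_compat; lra. apply exp_pos. }
  assert (Hgd := g_le_delta h q lam1 zM delta z4 Hh0 Hq Hl1 Hz4b Hz4 HdelM Hdel).
  assert (Hhz := hz_mono h q z4 Hh0 Hq Hz4a).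
  assert (HepsD0 : 0 < eps * D) by (apply Rmult_lt_0_compat; lra).
  assert (Hupos : forall z, z4 <= z -> 0 < h * z - q * sqrt z).
  { intros z Hz. specialize (Hhz z Hz). lra. }
  assert (BpL0 : forall x, 0 < psi_low delta h q lam1 z4 x).
  { intros x. unfold psi_low. destruct (Rle_dec x z4). lra.
    apply Rmult_lt_0_compat. apply Hupos; lra. apply exp_pos. }
  assert (BpLg : forall x, (h * x - q * sqrt x) * exp (- lam1 * x) <= psi_low delta h q lam1 z4 x).
  { intros x. unfold psi_low. destruct (Rle_dec x z4). apply Hgd; auto. lra. }
  assert (DU1 : forall z, z < 0 -> is_derive (phi_up eps lam1) z 0).
  { intros z Hz. apply (pw_deriv_l _ _ _ 0 z 0 (phiU_eq eps lam1)); auto. auto_derive; auto; ring. }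
  assert (DU2 : forall z, 0 < z -> is_derive (phi_up eps lam1) z (eps * lam1 * exp (- lam1 * z))).
  { intros z Hz. apply (pw_deriv_r _ _ _ 0 z _ (phiU_eq eps lam1)); auto. auto_derive; auto; ring. }
  assert (DL1 : forall z, z < z3 -> is_derive (phi_low lam0 z3) z 0).
  { intros z Hz. apply (pw_deriv_l _ _ _ z3 z 0 (phiL_eq lam0 z3)); auto. auto_derive; auto; ring. }
  assert (DL2 : forall z, z3 < z -> is_derive (phi_low lam0 z3) z (/ 2 * lam0 * exp (- lam0 * (z - z3)))).
  { intros z Hz. apply (pw_deriv_r _ _ _ z3 z _ (phiL_eq lam0 z3)); auto. auto_derive; auto. replace (z + - z3) with (z - z3) by ring. ring. }
  assert (DpU1 : forall z, z < z2 -> is_derive (psi_up h lam1 z2) z 0).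
  { intros z Hz. apply (pw_deriv_l _ _ _ z2 z 0 (psiU_eq h lam1 z2)); auto. auto_derive; auto; ring. }
  assert (DpU2 : forall z, z2 < z -> is_derive (psi_up h lam1 z2) z (h * exp (- lam1 * z) * (1 - lam1 * z))).
  { intros z Hz. apply (pw_deriv_r _ _ _ z2 z _ (psiU_eq h lam1 z2)); auto. auto_derive; auto; ring. }
  assert (DpL1 : forall z, z < z4 -> is_derive (psi_low delta h q lam1 z4) z 0).
  { intros z Hz. apply (pw_deriv_l _ _ _ z4 z 0 (psiL_eq delta h q lam1 z4)); auto. auto_derive; auto; ring. }
  assert (DpL2 : forall z, z4 < z -> is_derive (psi_low delta h q lam1 z4) z
      (exp (- lam1 * z) * (h - q / (2 * sqrt z)) - lam1 * (h * z - q * sqrt z) * exp (- lam1 * z))).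
  { intros z Hz. apply (pw_deriv_r _ _ _ z4 z _ (psiL_eq delta h q lam1 z4)); auto.
    assert (0 < sqrt z) by (apply sqrt_lt_R0; lra).
    auto_derive. lra. field. lra. }

  assert (BU' : forall x, 0 <= phi_up eps lam1 x <= 1) by (intros x; specialize (BU x); lra).
  assert (BL' : forall x, 0 <= phi_low lam0 z3 x <= 1) by (intros x; specialize (BL x); lra).
  assert (HexI1 : ex_RInt_R (fun y => J1 y * exp (lam0 * y))).
  { destruct HK1 as [_ [_ [_ [_ [_ [H6 _]]]]]]. apply H6; auto. }
  assert (Ineq1 : forall z, z <> 0 ->
    Nop J1 (phi_up eps lam1) z + s * Derive (phi_up eps lam1) z
      + a * phi_up eps lam1 z * (1 - phi_up eps lam1 z) - psi_low delta h q lam1 z4 z <= 0).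
  { intros z Hz0. unfold Nop.
    assert (HN := J1_upper J1 lamhat1 HK1 (phi_up eps lam1) z HcU BU').
    assert (HsD : eps * D = eps + eps * (s * lam1) + eps * a) by (unfold D; ring).
    assert (Hsl : 0 <= eps * (s * lam1)) by (apply Rmult_le_pos; [lra|apply Rmult_le_pos; lra]).
    destruct (Rtotal_order z 0) as [Hlt|[Heq|Hgt]]; [| contradiction |].
    - rewrite (is_derive_unique _ _ _ (DU1 z Hlt)).
      assert (Hv : phi_up eps lam1 z = 1 - eps) by (unfold phi_up; destruct (Rle_dec z 0); lra).
      assert (Hw : psi_low delta h q lam1 z4 z = delta) by (unfold psi_low; destruct (Rle_dec z z4); lra).
      rewrite Hv, Hw.
      assert (a * (1 - eps) * (1 - (1 - eps)) <= a * eps).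
      { replace (a * (1 - eps) * (1 - (1 - eps))) with (a * eps - a * (eps * eps)) by ring.
        assert (0 <= a * (eps * eps)) by (apply Rmult_le_pos; [lra|apply Rle_0_sqr]). lra. }
      lra.
    - rewrite (is_derive_unique _ _ _ (DU2 z Hgt)).
      assert (Hv : phi_up eps lam1 z = 1 - eps * exp (- lam1 * z)) by (unfold phi_up; destruct (Rle_dec z 0); lra).
      rewrite Hv.
      assert (HE0 : 0 < exp (- lam1 * z)) by apply exp_pos.
      assert (HE1 : exp (- lam1 * z) < 1) by (apply exp_lt1; assert (0 < lam1 * z) by (apply Rmult_lt_0_compat; lra); lra).
      assert (HX0 : 0 < eps * exp (- lam1 * z)) by (apply Rmult_lt_0_compat; lra).
      assert (HX1 : eps * exp (- lam1 * z) < eps) by (rewrite <- (Rmult_1_r eps) at 2; apply Rmult_lt_compat_l; lra).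
      assert (Ha2 : a * (1 - eps * exp (- lam1 * z)) * (1 - (1 - eps * exp (- lam1 * z))) <= a * (eps * exp (- lam1 * z))).
      { set (X := eps * exp (- lam1 * z)).
        replace (a * (1 - X) * (1 - (1 - X))) with (a * X - a * (X * X)) by ring.
        assert (0 <= a * (X * X)) by (apply Rmult_le_pos; [lra|apply Rle_0_sqr]). lra. }
      assert (HpsiL : eps * D * exp (- lam1 * z) <= psi_low delta h q lam1 z4 z).
      { unfold psi_low. destruct (Rle_dec z z4).
        - assert (eps * D * exp (- lam1 * z) <= eps * D * 1) by (apply Rmult_le_compat_l; lra). lra.
        - apply Rmult_le_compat_r; [lra|]. specialize (Hhz z ltac:(lra)). lra. }
      assert (HDe : eps * D * exp (- lam1 * z) = eps * exp (- lam1 * z) + s * (eps * lam1 * exp (- lam1 * z)) + a * (eps * exp (- lam1 * z))) by (unfold D; ring).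
      lra. }
  assert (Ineq3 : forall z, z <> z3 ->
    Nop J1 (phi_low lam0 z3) z + s * Derive (phi_low lam0 z3) z
      + a * phi_low lam0 z3 z * (1 - phi_low lam0 z3 z) - psi_up h lam1 z2 z >= 0).
  { intros z Hz0. unfold Nop.
    destruct (Rtotal_order z z3) as [Hlt|[Heq|Hgt]]; [| contradiction |].
    - rewrite (is_derive_unique _ _ _ (DL1 z Hlt)).
      assert (Hv : phi_low lam0 z3 z = / 2) by (unfold phi_low; destruct (Rle_dec z z3); lra).
      rewrite Hv.
      assert (HN := J1_lower J1 lamhat1 HK1 (phi_low lam0 z3) z (/ 2) 0 lam0 HcL BL' HexI1).
      assert (HN' : / 2 + 0 * Ik J1 lam0 <= RInt_R (fun y => J1 y * phi_low lam0 z3 (z - y))).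
      { apply HN. intros y. specialize (BL (z - y)). lra. }
      specialize (BpU1 z). lra.
    - rewrite (is_derive_unique _ _ _ (DL2 z Hgt)).
      set (c := exp (- lam0 * (z - z3))).
      assert (Hc0 : 0 < c) by apply exp_pos.
      assert (Hc1 : c < 1) by (apply exp_lt1; assert (0 < lam0 * (z - z3)) by (apply Rmult_lt_0_compat; lra); lra).
      assert (Hv : phi_low lam0 z3 z = 1 - / 2 * c) by (unfold phi_low, c; destruct (Rle_dec z z3); lra).
      assert (Hw : psi_up h lam1 z2 z = h * z * exp (- lam1 * z)) by (unfold psi_up; destruct (Rle_dec z z2); lra).
      rewrite Hv, Hw.
      assert (HN := J1_lower J1 lamhat1 HK1 (phi_low lam0 z3) z 1 (- / 2 * c) lam0 HcL BL' HexI1).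
      assert (HN' : 1 + - / 2 * c * Ik J1 lam0 <= RInt_R (fun y => J1 y * phi_low lam0 z3 (z - y))).
      { apply HN. intros y.
        assert (Hcy : c * exp (lam0 * y) = exp (- lam0 * (z - y - z3))) by (unfold c; rewrite <- exp_plus; f_equal; ring).
        unfold phi_low. destruct (Rle_dec (z - y) z3).
        - assert (H1 := exp_ineq1_le (- lam0 * (z - y - z3))).
          assert (0 <= - lam0 * (z - y - z3)).
          { replace (- lam0 * (z - y - z3)) with (lam0 * (z3 - (z - y))) by ring. apply Rmult_le_pos; lra. }
          replace (1 + - / 2 * c * exp (lam0 * y)) with (1 - / 2 * (c * exp (lam0 * y))) by ring.
          rewrite Hcy. lra.
        - replace (1 + - / 2 * c * exp (lam0 * y)) with (1 - / 2 * (c * exp (lam0 * y))) by ring.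
          rewrite Hcy. lra. }
      assert (Hb1 := psiU_exp_bound h lam0 lam1 z3 a z Hh0 Hl0 Hl01 ltac:(lra) Hz3b). fold c in Hb1.
      assert (Hm1' : 0 <= c * (1 - Ik J1 lam0 + s * lam0)) by (apply Rmult_le_pos; lra).
      assert (Hm2' : a * c / 4 <= a * (1 - / 2 * c) * (1 - (1 - / 2 * c))).
      { replace (a * (1 - / 2 * c) * (1 - (1 - / 2 * c))) with (a * c / 4 + a * c * (1 - c) / 4) by field.
        assert (0 <= a * c * (1 - c)) by (apply Rmult_le_pos; [apply Rmult_le_pos|]; lra). lra. }
      lra. }

  assert (NJ2 : forall u : R -> R, (forall x, continuous u x) -> forall z,
     RInt_R (fun y => J2 y * u (z - y)) = RInt (fun y => J2 y * u (z - y)) (- S) S).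
  { intros u Hu z. apply (J2_compact J2 lamhat2 S HK2 HS Hsupp (fun y => u (z - y))).
    apply cont_shift; auto. }
  assert (Ej1 : ex_RInt (fun y => J2 y * exp (lam1 * y)) (- S) S)
    by (apply exR; apply (cont_J2 J2 lamhat2 HK2); apply J2_cont_exp).
  assert (Ejy : ex_RInt (fun y => J2 y * (y * exp (lam1 * y))) (- S) S)
    by (apply exR; apply (cont_J2 J2 lamhat2 HK2); apply cont_yexp).
  assert (Ejyy : ex_RInt (fun y => J2 y * (y ^ 2 * exp (lam1 * y))) (- S) S)
    by (apply exR; apply (cont_J2 J2 lamhat2 HK2); apply cont_y2exp).
  assert (Ineq2 : forall z, z <> z2 ->
    d * Nop J2 (psi_up h lam1 z2) z + s * Derive (psi_up h lam1 z2) z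
      + b * psi_up h lam1 z2 z * (1 - psi_up h lam1 z2 z / phi_up eps lam1 z) <= 0).
  { intros z Hz0. unfold Nop. rewrite (NJ2 _ HcpU z).
    assert (Hex : ex_RInt (fun y => J2 y * psi_up h lam1 z2 (z - y)) (- S) S)
      by (apply exR; apply (cont_J2 J2 lamhat2 HK2); apply cont_shift; auto).
    assert (Hph := BU z). assert (Hph0 : 0 < phi_up eps lam1 z) by lra.
    destruct (Rtotal_order z z2) as [Hlt|[Heq|Hgt]]; [| contradiction |].
    - rewrite (is_derive_unique _ _ _ (DpU1 z Hlt)).
      assert (Hv : psi_up h lam1 z2 z = 1) by (unfold psi_up; destruct (Rle_dec z z2); lra).
      rewrite Hv.
      assert (HN : RInt (fun y => J2 y * psi_up h lam1 z2 (z - y)) (- S) S <= RInt J2 (- S) S).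
      { apply RInt_le; auto. lra. apply exR, (kernel_cont _ _ HK2).
        intros y _. assert (HJ := kernel_nonneg _ _ HK2 y). specialize (BpU1 (z - y)).
        rewrite <- (Rmult_1_r (J2 y)) at 2. apply Rmult_le_compat_l; auto. }
      rewrite (J2_int1 J2 lamhat2 S HK2 HS Hsupp) in HN.
      assert (Hinv : 1 <= 1 / phi_up eps lam1 z).
      { unfold Rdiv. rewrite Rmult_1_l. rewrite <- Rinv_1 at 1. apply Rinv_le_contravar; lra. }
      assert (d * (RInt (fun y => J2 y * psi_up h lam1 z2 (z - y)) (- S) S - 1) <= 0)
        by (apply Rmult_le_0_l; lra).
      assert (b * 1 * (1 - 1 / phi_up eps lam1 z) <= 0) by (apply Rmult_le_0_l; lra).
      lra.
    - rewrite (is_derive_unique _ _ _ (DpU2 z Hgt)).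
      assert (Hv : psi_up h lam1 z2 z = h * z * exp (- lam1 * z)) by (unfold psi_up; destruct (Rle_dec z z2); lra).
      rewrite Hv.
      set (E := exp (- lam1 * z)).
      assert (HE : 0 < E) by apply exp_pos.
      assert (HN : RInt (fun y => J2 y * psi_up h lam1 z2 (z - y)) (- S) S <=
                   (h * z * E) * I2 + (- (h * E)) * K1 + 0 * I2).
      { rewrite HI2. unfold K1.
        rewrite <- (RInt_lin3 (fun y => J2 y * exp (lam1 * y)) (fun y => J2 y * (y * exp (lam1 * y)))
                     (fun y => J2 y * exp (lam1 * y)) (h * z * E) (- (h * E)) 0 (- S) S Ej1 Ejy Ej1).
        apply RInt_le; [lra|auto| |].
        { apply exR. intros y.
          apply (continuous_plus (fun y => h * z * E * (J2 y * exp (lam1 * y)) + - (h * E) * (J2 y * (y * exp (lam1 * y))))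
             (fun y => 0 * (J2 y * exp (lam1 * y)))).
          apply (continuous_plus (fun y => h * z * E * (J2 y * exp (lam1 * y))) (fun y => - (h * E) * (J2 y * (y * exp (lam1 * y))))).
          apply (continuous_scal_r (h * z * E) (fun y => (J2 y * exp (lam1 * y)))). apply (cont_J2 J2 lamhat2 HK2); apply J2_cont_exp.
          apply (continuous_scal_r (- (h * E)) (fun y => (J2 y * (y * exp (lam1 * y))))). apply (cont_J2 J2 lamhat2 HK2); apply cont_yexp.
          apply (continuous_scal_r 0 (fun y => (J2 y * exp (lam1 * y)))). apply (cont_J2 J2 lamhat2 HK2); apply J2_cont_exp. }
        intros y Hy.
        assert (HJ := kernel_nonneg _ _ HK2 y).
        assert (Hf := psi_up_le_f h lam1 z1 z2 Hl1 Hh Hz2e Hroots Hz2l (z - y) ltac:(lra)).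
        assert (Hey : exp (- lam1 * (z - y)) = E * exp (lam1 * y)) by (unfold E; rewrite <- exp_plus; f_equal; ring).
        rewrite Hey in Hf.
        replace (h * z * E * (J2 y * exp (lam1 * y)) + - (h * E) * (J2 y * (y * exp (lam1 * y))) + 0 * (J2 y * exp (lam1 * y)))
          with (J2 y * (h * (z - y) * (E * exp (lam1 * y)))) by ring.
        apply Rmult_le_compat_l; auto. }
      assert (HdN := Rmult_le_compat_l d _ _ ltac:(lra) HN).
      assert (HA' : h * z * E * (d * (I2 - 1) - s * lam1 + b) = 0) by (rewrite HA; ring).
      assert (HK' : h * E * (d * K1) = h * E * s) by (rewrite HdK1; ring).
      assert (Hsplit : b * (h * z * E) * (1 - h * z * E / phi_up eps lam1 z) =
                       b * (h * z * E) - b * (h * z * E) * (h * z * E / phi_up eps lam1 z)) by ring.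
      assert (0 <= b * (h * z * E) * (h * z * E / phi_up eps lam1 z)).
      { assert (0 < h * z * E) by (repeat apply Rmult_lt_0_compat; lra).
        apply Rmult_le_pos. apply Rmult_le_pos; lra.
        apply Rmult_le_pos. lra. left; apply Rinv_0_lt_compat; lra. }
      lra. }

  assert (Ineq4 : forall z, z <> z4 ->
    d * Nop J2 (psi_low delta h q lam1 z4) z + s * Derive (psi_low delta h q lam1 z4) z
      + b * psi_low delta h q lam1 z4 z * (1 - psi_low delta h q lam1 z4 z / phi_low lam0 z3 z) >= 0).
  { intros z Hz0. unfold Nop. rewrite (NJ2 _ HcpL z).
    assert (Hex : ex_RInt (fun y => J2 y * psi_low delta h q lam1 z4 (z - y)) (- S) S)
      by (apply exR; apply (cont_J2 J2 lamhat2 HK2); apply cont_shift; auto).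
    assert (Hph := BL z). assert (Hph0 : 0 < phi_low lam0 z3 z) by lra.
    assert (Hinv2 : / phi_low lam0 z3 z <= 2).
    { assert (H := Rinv_le_contravar (/ 2) (phi_low lam0 z3 z) ltac:(lra) ltac:(lra)).
      rewrite Rinv_inv in H. exact H. }
    assert (Hinv0 : 0 < / phi_low lam0 z3 z) by (apply Rinv_0_lt_compat; lra).
    destruct (Rtotal_order z z4) as [Hlt|[Heq|Hgt]]; [| contradiction |].
    - rewrite (is_derive_unique _ _ _ (DpL1 z Hlt)).
      assert (Hv : psi_low delta h q lam1 z4 z = delta) by (unfold psi_low; destruct (Rle_dec z z4); lra).
      rewrite Hv.
      assert (HN : 0 <= RInt (fun y => J2 y * psi_low delta h q lam1 z4 (z - y)) (- S) S).
      { apply RInt_ge_0; [lra|auto|]. intros y _. apply Rmult_le_pos.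
        apply (kernel_nonneg _ _ HK2). left; apply BpL0. }
      assert (Hbd : 2 * b * delta < b - d).
      { assert (H := Rmult_lt_compat_l b _ _ Hb Hdelb).
        replace (b * (/ 2 * (1 - d / b))) with ((b - d) / 2) in H by (field; lra). lra. }
      assert (Hq1 : delta / phi_low lam0 z3 z <= 2 * delta).
      { unfold Rdiv. rewrite Rmult_comm. apply Rmult_le_compat_r; lra. }
      assert (Hq2' : b * delta * (delta / phi_low lam0 z3 z) <= b * delta * (2 * delta))
        by (apply Rmult_le_compat_l; [apply Rmult_le_pos|]; lra).
      assert (Hpos : 0 < delta * (b - d - 2 * b * delta)) by (apply Rmult_lt_0_compat; lra).
      assert (d * RInt (fun y => J2 y * psi_low delta h q lam1 z4 (z - y)) (- S) S >= 0)
        by (apply Rle_ge, Rmult_le_pos; lra).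
      lra.
    - rewrite (is_derive_unique _ _ _ (DpL2 z Hgt)).
      assert (Hv : psi_low delta h q lam1 z4 z = (h * z - q * sqrt z) * exp (- lam1 * z))
        by (unfold psi_low; destruct (Rle_dec z z4); lra).
      rewrite Hv.
      assert (Hu0 : 0 < h * z - q * sqrt z) by (apply Hupos; lra).
      assert (HzS : S < z) by lra.
      assert (Hsq : 0 < sqrt z) by (apply sqrt_lt_R0; lra).
      set (E := exp (- lam1 * z)).
      set (u := h * z - q * sqrt z) in *.
      set (W := (z + S) * sqrt (z + S)).
      set (r := h - q / (2 * sqrt z)).
      assert (HE : 0 < E) by apply exp_pos.
      assert (HW : 0 < W) by (unfold W; apply Rmult_lt_0_compat; [lra| apply sqrt_lt_R0; lra]).
      assert (HN : (u * E) * I2 + (- (r * E)) * K1 + (q * E / (8 * W)) * K2 <=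
                   RInt (fun y => J2 y * psi_low delta h q lam1 z4 (z - y)) (- S) S).
      { rewrite HI2. unfold K1, K2.
        rewrite <- (RInt_lin3 (fun y => J2 y * exp (lam1 * y)) (fun y => J2 y * (y * exp (lam1 * y)))
                     (fun y => J2 y * (y ^ 2 * exp (lam1 * y))) (u * E) (- (r * E)) (q * E / (8 * W)) (- S) S Ej1 Ejy Ejyy).
        apply RInt_le; [lra| |auto|].
        { apply exR. intros y.
          apply (continuous_plus (fun y => u * E * (J2 y * exp (lam1 * y)) + - (r * E) * (J2 y * (y * exp (lam1 * y))))
             (fun y => q * E / (8 * W) * (J2 y * (y ^ 2 * exp (lam1 * y))))).
          apply (continuous_plus (fun y => u * E * (J2 y * exp (lam1 * y))) (fun y => - (r * E) * (J2 y * (y * exp (lam1 * y))))).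
          apply (continuous_scal_r (u * E) (fun y => (J2 y * exp (lam1 * y)))). apply (cont_J2 J2 lamhat2 HK2); apply J2_cont_exp.
          apply (continuous_scal_r (- (r * E)) (fun y => (J2 y * (y * exp (lam1 * y))))). apply (cont_J2 J2 lamhat2 HK2); apply cont_yexp.
          apply (continuous_scal_r (q * E / (8 * W)) (fun y => (J2 y * (y ^ 2 * exp (lam1 * y))))). apply (cont_J2 J2 lamhat2 HK2); apply cont_y2exp. }
        intros y Hy.
        assert (HJ := kernel_nonneg _ _ HK2 y).
        assert (Hg := BpLg (z - y)).
        assert (Hey : exp (- lam1 * (z - y)) = E * exp (lam1 * y)) by (unfold E; rewrite <- exp_plus; f_equal; ring).
        assert (Ht := sqrt_taylor z y S HS HzS ltac:(lra)). fold W in Ht.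
        assert (Hey0 := exp_pos (lam1 * y)).
        assert (Hlow : (u - r * y + q / (8 * W) * y ^ 2) * (E * exp (lam1 * y)) <=
                       (h * (z - y) - q * sqrt (z - y)) * exp (- lam1 * (z - y))).
        { rewrite Hey. apply Rmult_le_compat_r. left; apply Rmult_lt_0_compat; lra.
          assert (Hid : u - r * y + q / (8 * W) * y ^ 2 =
                        h * (z - y) - q * (sqrt z - y / (2 * sqrt z) - y ^ 2 / (8 * W))).
          { unfold u, r. field. split; lra. }
          rewrite Hid.
          assert (q * sqrt (z - y) <= q * (sqrt z - y / (2 * sqrt z) - y ^ 2 / (8 * W)))
            by (apply Rmult_le_compat_l; lra).
          lra. }
        replace (u * E * (J2 y * exp (lam1 * y)) + - (r * E) * (J2 y * (y * exp (lam1 * y))) +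
                 q * E / (8 * W) * (J2 y * (y ^ 2 * exp (lam1 * y))))
          with (J2 y * ((u - r * y + q / (8 * W) * y ^ 2) * (E * exp (lam1 * y)))) by (field; lra).
        apply Rmult_le_compat_l; auto. lra. }
      assert (HdN := Rmult_le_compat_l d _ _ ltac:(lra) HN).
      assert (HA' : u * E * (d * (I2 - 1) - s * lam1 + b) = 0) by (rewrite HA; ring).
      assert (HK' : r * E * (d * K1) = r * E * s) by (rewrite HdK1; ring).
      assert (Hsplit : b * (u * E) * (1 - u * E / phi_low lam0 z3 z) =
                       b * (u * E) - b * ((u * E) * (u * E)) * / phi_low lam0 z3 z) by (field; lra).
      assert (HuE : 0 < u * E) by (apply Rmult_lt_0_compat; lra).
      assert (Huhz : u * E <= h * z * E).
      { apply Rmult_le_compat_r; [lra|]. unfold u. assert (0 <= q * sqrt z) by (apply Rmult_le_pos; lra). lra. }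
      assert (Hsq2 : (u * E) * (u * E) <= (h * z * E) * (h * z * E)) by (apply Rmult_le_compat; lra).
      assert (Hbq : b * ((u * E) * (u * E)) * / phi_low lam0 z3 z <= 2 * b * ((h * z * E) * (h * z * E))).
      { apply Rle_trans with (b * ((u * E) * (u * E)) * 2).
        apply Rmult_le_compat_l; auto. apply Rmult_le_pos. lra. apply Rmult_le_pos; lra.
        assert (b * (u * E * (u * E)) <= b * (h * z * E * (h * z * E))) by (apply Rmult_le_compat_l; lra).
        lra. }
      assert (HLz := HL z ltac:(lra)).
      rewrite Rpower_3_2 in HLz by lra. fold E W in HLz.
      assert (Hkey : 16 * b * h ^ 2 * (z ^ 2 * W * E) < q * (d * K2)).
      { apply Rle_lt_trans with (16 * b * h ^ 2 * L); auto.
        apply Rmult_le_compat_l; [|exact HLz]. assert (0 < h ^ 2) by (apply pow_lt; lra).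
        apply Rmult_le_pos; [apply Rmult_le_pos|]; lra. }
      assert (Hkey2 : 2 * b * ((h * z * E) * (h * z * E)) < d * (q * E / (8 * W) * K2)).
      { apply Rmult_lt_compat_r with (r := E / (8 * W)) in Hkey.
        2: apply Rdiv_lt_0_compat; lra.
        replace (16 * b * h ^ 2 * (z ^ 2 * W * E) * (E / (8 * W))) with (2 * b * ((h * z * E) * (h * z * E))) in Hkey by (field; lra).
        replace (q * (d * K2) * (E / (8 * W))) with (d * (q * E / (8 * W) * K2)) in Hkey by (field; lra).
        exact Hkey. }
      lra. }

  unfold upper_lower_pair. split; [|split; [|split]].
  - intros z. specialize (BU z). specialize (BL z). repeat split; auto; lra.
  - intros z. repeat split; auto.
  - intros z. split.
    + unfold phi_low, phi_up. destruct (Rle_dec z z3), (Rle_dec z 0).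
      * lra.
      * assert (exp (- lam1 * z) < 1) by (apply exp_lt1; assert (0 < lam1 * z) by (apply Rmult_lt_0_compat; lra); lra).
        assert (eps * exp (- lam1 * z) < eps * 1) by (apply Rmult_lt_compat_l; lra). lra.
      * lra.
      * assert (exp (- lam1 * z) <= exp (- lam0 * (z - z3))).
        { apply exp_le. assert (lam0 * z <= lam1 * z) by (apply Rmult_le_compat_r; lra).
          assert (0 <= lam0 * z3) by (apply Rmult_le_pos; lra). lra. }
        assert (eps * exp (- lam1 * z) <= eps * exp (- lam0 * (z - z3))) by (apply Rmult_le_compat_l; lra).
        assert (0 < exp (- lam0 * (z - z3))) by apply exp_pos.
        assert (eps * exp (- lam0 * (z - z3)) <= / 2 * exp (- lam0 * (z - z3))) by (apply Rmult_le_compat_r; lra).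
        lra.
    + unfold psi_low, psi_up. destruct (Rle_dec z z4), (Rle_dec z z2).
      * lra.
      * assert (Hd4 : delta <= h * z4 * exp (- lam1 * z4)).
        { rewrite <- Hz4. apply Rmult_le_compat_r. left; apply exp_pos.
          assert (0 <= q * sqrt z4) by (apply Rmult_le_pos; [lra|apply sqrt_pos]). lra. }
        assert (z4 * exp (- lam1 * z4) <= z * exp (- lam1 * z)) by (apply xexp_decr; lra).
        assert (h * (z4 * exp (- lam1 * z4)) <= h * (z * exp (- lam1 * z))) by (apply Rmult_le_compat_l; lra).
        rewrite Rmult_assoc. lra.
      * lra.
      * apply Rmult_le_compat_r. left; apply exp_pos.
        assert (0 <= q * sqrt z) by (apply Rmult_le_pos; [lra|apply sqrt_pos]). lra.
  - exists (0 :: z2 :: z3 :: z4 :: nil). intros z Hz.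
    assert (H0 : z <> 0) by (intros ->; apply Hz; simpl; auto).
    assert (H2 : z <> z2) by (intros ->; apply Hz; simpl; auto).
    assert (H3 : z <> z3) by (intros ->; apply Hz; simpl; auto).
    assert (H4 : z <> z4) by (intros ->; apply Hz; simpl; auto).
    split; [|split; [|split; [|split; [|split; [|split; [|split]]]]]].
    + destruct (Rtotal_order z 0) as [H|[H|H]]; [exists 0; auto | contradiction | eexists; apply DU2; auto].
    + destruct (Rtotal_order z z2) as [H|[H|H]]; [exists 0; auto | contradiction | eexists; apply DpU2; auto].
    + destruct (Rtotal_order z z3) as [H|[H|H]]; [exists 0; auto | contradiction | eexists; apply DL2; auto].
    + destruct (Rtotal_order z z4) as [H|[H|H]]; [exists 0; auto | contradiction | eexists; apply DpL2; auto].
    + apply Ineq1; auto.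
    + apply Ineq2; auto.
    + apply Ineq3; auto.
    + apply Ineq4; auto.
Qed.
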